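(* For every $n\geq 3$ we have $P_h(\ast_n)=\{2,3,4,\ldots\}\cup\{+\infty\}$.
   Context: For $n\geq 3$, the star graph $\ast_n$ is the topological graph with $n+1$ vertices $0,1,\ldots,n$ and $n$ edges $[0,1],[0,2],\ldots,[0,n]$, i.e. the union of $n$ arcs, the $i$-th having end points $0$ and $i$, any two of which meet only at the common end point $0$. For a topological space $A$, $Homeo(A)$ denotes the group of all homeomorphisms $A\to A$ under composition. For a subgroup $G$ of $Homeo(A)$ (acting by $gx=g(x)$), a nonempty subset $Y\subseteq A$ is invariant if $g(y)\in Y$ for all $g\in G$, $y\in Y$. The height of $(G,A)$ is $h(G,A)=\sup\{n\geq 0:$ there exist distinct closed invariant subsets $Y_0\subset Y_1\subset\cdots\subset Y_n=A\}$ (possibly $+\infty$). Finally $P_h(A)=\{h(G,A): G \text{ is a subgroup of } Homeo(A)\}$. *)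

(* Defs.v *)
From Stdlib Require Import Reals Lra Lia Arith.
Open Scope R_scope.

(* The star graph *_n, modelled metrically: a point is a pair (i, t) with
   t in (0,1] the position on the i-th edge (i < n, edges numbered 0..n-1,
   the end point of edge i being (i,1)), or the centre (0, 0). *)
Definition star_pt (n : nat) (p : nat * R) : Prop :=
  (fst p = 0%nat /\ snd p = 0) \/ ((fst p < n)%nat /\ 0 < snd p <= 1).

Definition star (n : nat) : Type := { p : nat * R | star_pt n p }.

Definition star_dist {n : nat} (x y : star n) : R :=
  let (i, s) := proj1_sig x in
  let (j, t) := proj1_sig y in
  if Nat.eqb i j then Rabs (s - t) else s + t.

Definition is_open {n : nat} (U : star n -> Prop) : Prop :=
  forall x, U x -> exists e, 0 < e /\ forall y, star_dist x y < e -> U y.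

Definition is_closed {n : nat} (Y : star n -> Prop) : Prop :=
  is_open (fun x => ~ Y x).

Definition is_continuous {n : nat} (f : star n -> star n) : Prop :=
  forall x e, 0 < e -> exists d, 0 < d /\
    forall y, star_dist x y < d -> star_dist (f x) (f y) < e.

Definition is_homeo {n : nat} (f : star n -> star n) : Prop :=
  is_continuous f /\ exists g, is_continuous g /\
    (forall x, g (f x) = x) /\ (forall x, f (g x) = x).

Definition is_subgroup {n : nat} (G : (star n -> star n) -> Prop) : Prop :=
  (forall f, G f -> is_homeo f) /\
  G (fun x => x) /\
  (forall f g, G f -> G g -> G (fun x => f (g x))) /\
  (forall f, G f -> exists g, G g /\ (forall x, g (f x) = x) /\ (forall x, f (g x) = x)).

Definition invariant {n : nat} (G : (star n -> star n) -> Prop) (Y : star n -> Prop) : Prop :=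
  (exists y, Y y) /\ forall g y, G g -> Y y -> Y (g y).

Definition closed_invariant {n : nat} (G : (star n -> star n) -> Prop) (Y : star n -> Prop) : Prop :=
  invariant G Y /\ is_closed Y.

Definition strict_subset {n : nat} (Y Z : star n -> Prop) : Prop :=
  (forall x, Y x -> Z x) /\ exists x, Z x /\ ~ Y x.

Definition has_chain {n : nat} (G : (star n -> star n) -> Prop) (m : nat) : Prop :=
  exists Y : nat -> (star n -> Prop),
    (forall i, (i <= m)%nat -> closed_invariant G (Y i)) /\
    (forall i, (i < m)%nat -> strict_subset (Y i) (Y (S i))) /\
    (forall x, Y m x).

Inductive natinf : Type := Fin (k : nat) | Inf.

Definition height_is {n : nat} (G : (star n -> star n) -> Prop) (h : natinf) : Prop :=
  match h with
  | Fin m => has_chain G m /\ forall k, has_chain G k -> (k <= m)%nat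
  | Inf => forall m, exists k, (m <= k)%nat /\ has_chain G k
  end.

Definition P_h (n : nat) (h : natinf) : Prop :=
  exists G : (star n -> star n) -> Prop, is_subgroup G /\ height_is G h.

(* Main.v *)
Require Import Defs.
From Stdlib Require Import Reals Arith Lra Lia ZArith Psatz.
From Stdlib Require Import Classical ClassicalEpsilon ProofIrrelevance.
Open Scope R_scope.

Definition ps {n : nat} (x : star n) : R := snd (proj1_sig x).
Definition edge {n : nat} (x : star n) : nat := fst (proj1_sig x).

Lemma pt_eq {n} (x y : star n) : proj1_sig x = proj1_sig y -> x = y.
Proof.
  destruct x as [p Hp], y as [q Hq]; simpl; intros <-.
  f_equal; apply proof_irrelevance.
Qed.

Lemma pt_eq2 {n} (x y : star n) : edge x = edge y -> ps x = ps y -> x = y.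
Proof.
  intros H1 H2; apply pt_eq; unfold edge, ps in *.
  destruct (proj1_sig x), (proj1_sig y); simpl in *; subst; reflexivity.
Qed.

Definition centre (n : nat) : star n :=
  exist _ (0%nat, 0) (or_introl (conj eq_refl eq_refl)).

Definition mk {n : nat} (p : nat * R) : star n :=
  match excluded_middle_informative (star_pt n p) with
  | left H => exist _ p H
  | right _ => centre n
  end.

Lemma mk_val n p : star_pt n p -> proj1_sig (@mk n p) = p.
Proof.
  intro H; unfold mk; destruct (excluded_middle_informative _); simpl; tauto.
Qed.

Lemma mk_ps n i t : (i < n)%nat -> 0 < t <= 1 -> ps (@mk n (i, t)) = t.
Proof. intros; unfold ps; rewrite mk_val; simpl; auto; right; simpl; auto. Qed.

Lemma mk_edge n i t : (i < n)%nat -> 0 < t <= 1 -> edge (@mk n (i, t)) = i.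
Proof. intros; unfold edge; rewrite mk_val; simpl; auto; right; simpl; auto. Qed.

Lemma ps_range {n} (x : star n) : 0 <= ps x <= 1.
Proof. destruct x as [[i t] [[H1 H2]|[H1 H2]]]; unfold ps; simpl in *; lra. Qed.

Lemma pos0 {n} (x : star n) : ps x = 0 -> x = centre n.
Proof.
  destruct x as [[i t] [[H1 H2]|[H1 H2]]]; unfold ps; simpl; intro H.
  - apply pt_eq; unfold centre; simpl in *; subst; auto.
  - simpl in H2; exfalso; lra.
Qed.

Lemma ps_centre n : ps (centre n) = 0.
Proof. reflexivity. Qed.

Lemma edge_lt {n} (x : star n) : ps x <> 0 -> (edge x < n)%nat.
Proof.
  destruct x as [[i t] [[H1 H2]|[H1 H2]]]; unfold ps, edge; simpl in *; intro H; tauto.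
Qed.

Lemma dist_same {n} (x y : star n) : edge x = edge y -> star_dist x y = Rabs (ps x - ps y).
Proof.
  unfold star_dist, edge, ps; destruct (proj1_sig x) as [i s], (proj1_sig y) as [j t];
  simpl; intros ->; rewrite Nat.eqb_refl; auto.
Qed.

Lemma dist_diff {n} (x y : star n) : edge x <> edge y -> star_dist x y = ps x + ps y.
Proof.
  unfold star_dist, edge, ps; destruct (proj1_sig x) as [i s], (proj1_sig y) as [j t];
  simpl; intros H; apply Nat.eqb_neq in H; rewrite H; auto.
Qed.

Lemma dist_centre_l {n} (y : star n) : star_dist (centre n) y = ps y.
Proof.
  destruct (Nat.eq_dec 0 (edge y)) as [E|E].
  - rewrite dist_same by auto. rewrite ps_centre. pose proof (ps_range y).
    rewrite Rabs_left1; lra.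
  - rewrite dist_diff by auto. rewrite ps_centre; lra.
Qed.

Lemma dist_sym {n} (x y : star n) : star_dist x y = star_dist y x.
Proof.
  destruct (Nat.eq_dec (edge x) (edge y)) as [E|E].
  - rewrite !dist_same by auto. apply Rabs_minus_sym.
  - rewrite !dist_diff by auto. lra.
Qed.

Lemma dist_centre_r {n} (y : star n) : star_dist y (centre n) = ps y.
Proof. rewrite dist_sym; apply dist_centre_l. Qed.

Lemma ps_lip {n} (x y : star n) : Rabs (ps x - ps y) <= star_dist x y.
Proof.
  pose proof (ps_range x); pose proof (ps_range y).
  destruct (Nat.eq_dec (edge x) (edge y)) as [E|E].
  - rewrite dist_same by auto; lra.
  - rewrite dist_diff by auto. unfold Rabs; destruct (Rcase_abs _); lra.
Qed.

Lemma dist_nonneg {n} (x y : star n) : 0 <= star_dist x y.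
Proof. pose proof (ps_lip x y). pose proof (Rabs_pos (ps x - ps y)). lra. Qed.

Lemma dist_lt_ps {n} (x y : star n) :
  0 < ps x -> star_dist x y < ps x -> edge y = edge x /\ 0 < ps y.
Proof.
  intros Hp Hd. pose proof (ps_range y).
  destruct (Nat.eq_dec (edge x) (edge y)) as [E|E].
  - split; auto. destruct (Req_dec (ps y) 0) as [Z|Z]; [|lra].
    rewrite dist_same in Hd by auto. rewrite Z, Rminus_0_r, Rabs_right in Hd; lra.
  - rewrite dist_diff in Hd by auto. lra.
Qed.

Lemma dist_self {n} (x : star n) : star_dist x x = 0.
Proof. rewrite dist_same by auto. rewrite Rminus_diag, Rabs_R0; auto. Qed.

Definition Rcont {n} (F : R -> star n) : Prop :=
  forall s e, 0 < e -> exists d, 0 < d /\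
    forall s', Rabs (s' - s) < d -> star_dist (F s) (F s') < e.

Lemma Rcont_comp {n} (f : star n -> star n) F :
  is_continuous f -> Rcont F -> Rcont (fun s => f (F s)).
Proof.
  intros Hf HF s e He. destruct (Hf (F s) e He) as [d1 [Hd1 H1]].
  destruct (HF s d1 Hd1) as [d2 [Hd2 H2]]. exists d2; split; auto.
Qed.

Lemma ps_continuity {n} (F : R -> star n) a :
  Rcont F -> continuity (fun s => ps (F s) - a).
Proof.
  intros HF x. unfold continuity_pt, continue_in, limit1_in, limit_in.
  intros e He. destruct (HF x e He) as [d [Hd H]]. exists d; split; auto.
  intros y [_ Hy]. simpl in *. unfold R_dist in *.
  specialize (H y Hy). pose proof (ps_lip (F x) (F y)).
  replace (ps (F y) - a - (ps (F x) - a)) with (- (ps (F x) - ps (F y))) by ring.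
  rewrite Rabs_Ropp. lra.
Qed.

Lemma side_aux {n} (F1 F2 : R -> star n) (p : star n) d :
  Rcont F2 -> 0 < ps p -> 0 < d -> F2 0 = p ->
  (forall s, 0 <= s <= d -> star_dist p (F1 s) < ps p) ->
  (forall s, 0 <= s <= d -> star_dist p (F2 s) < ps p) ->
  (forall s s', 0 < s <= d -> 0 < s' <= d -> F1 s <> F2 s') ->
  (ps p < ps (F1 d) <= ps (F2 d) \/ ps (F2 d) <= ps (F1 d) < ps p) -> False.
Proof.
  intros HC Hp Hd H20 D1 D2 Dis Hc.
  set (a := ps (F1 d)) in *.
  destruct (IVT_cor (fun s => ps (F2 s) - a) 0 d (ps_continuity F2 a HC))
    as [z [Hz Ez]]; [lra| |].
  { rewrite H20. destruct Hc; nra. }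
  assert (Ha : ps (F2 z) = a) by lra.
  assert (z <> 0). { intro; subst z. rewrite H20 in Ha. lra. }
  apply (Dis d z); try lra.
  assert (E1 : edge (F1 d) = edge p) by (apply (dist_lt_ps p (F1 d)); auto; apply D1; lra).
  assert (E2 : edge (F2 z) = edge p) by (apply (dist_lt_ps p (F2 z)); auto; apply D2; lra).
  apply pt_eq2; [congruence| rewrite Ha; reflexivity].
Qed.

Lemma side {n} (F1 F2 : R -> star n) (p : star n) d :
  Rcont F1 -> Rcont F2 -> 0 < ps p -> 0 < d -> F1 0 = p -> F2 0 = p ->
  (forall s, 0 <= s <= d -> star_dist p (F1 s) < ps p) ->
  (forall s, 0 <= s <= d -> star_dist p (F2 s) < ps p) ->
  (forall s s', 0 < s <= d -> 0 < s' <= d -> F1 s <> F2 s') ->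
  F1 d <> p -> F2 d <> p ->
  (ps (F1 d) - ps p) * (ps (F2 d) - ps p) < 0.
Proof.
  intros HC1 HC2 Hp Hd H10 H20 D1 D2 Dis N1 N2.
  assert (A1 : ps (F1 d) <> ps p).
  { intro E. apply N1.
    assert (E1 : edge (F1 d) = edge p) by (apply (dist_lt_ps p (F1 d)); auto; apply D1; lra).
    apply pt_eq2; auto. }
  assert (A2 : ps (F2 d) <> ps p).
  { intro E. apply N2.
    assert (E1 : edge (F2 d) = edge p) by (apply (dist_lt_ps p (F2 d)); auto; apply D2; lra).
    apply pt_eq2; auto. }
  destruct (Rlt_dec ((ps (F1 d) - ps p) * (ps (F2 d) - ps p)) 0) as [L|L]; auto.
  exfalso. apply Rnot_lt_le in L.
  assert (C : (ps p < ps (F1 d) /\ ps p < ps (F2 d)) \/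
              (ps (F1 d) < ps p /\ ps (F2 d) < ps p)).
  { destruct (Rlt_dec (ps p) (ps (F1 d))); destruct (Rlt_dec (ps p) (ps (F2 d))).
    - left; auto.
    - exfalso. assert (ps (F2 d) < ps p) by lra.
      assert ((ps (F1 d) - ps p) * (ps (F2 d) - ps p) < 0); [|lra].
      apply Rmult_pos_neg; lra.
    - exfalso. assert (ps (F1 d) < ps p) by lra.
      assert ((ps (F1 d) - ps p) * (ps (F2 d) - ps p) < 0); [|lra].
      apply Rmult_neg_pos; lra.
    - right; lra. }
  destruct (Rle_dec (ps (F1 d)) (ps (F2 d))).
  - destruct C as [[]|[]].
    + apply (side_aux F1 F2 p d); auto; lra.
    + apply (side_aux F2 F1 p d); auto; try lra; intros s s' ? ? E; apply (Dis s' s); auto.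
  - destruct C as [[]|[]].
    + apply (side_aux F2 F1 p d); auto; try lra; intros s s' ? ? E; apply (Dis s' s); auto.
    + apply (side_aux F1 F2 p d); auto; lra.
Qed.

Lemma mk_centre n : @mk n (0%nat, 0) = centre n.
Proof. apply pt_eq. rewrite mk_val; auto. left; simpl; auto. Qed.

Definition clamp (s : R) : R := Rmax 0 (Rmin s 1).

Lemma clamp_range s : 0 <= clamp s <= 1.
Proof. unfold clamp, Rmax, Rmin; repeat destruct Rle_dec; lra. Qed.
Lemma clamp_lip s s' : Rabs (clamp s - clamp s') <= Rabs (s - s').
Proof. unfold clamp, Rmax, Rmin, Rabs; repeat destruct Rle_dec; repeat destruct Rcase_abs; lra. Qed.
Lemma clamp_pos s : 0 < s -> 0 < clamp s.
Proof. unfold clamp, Rmax, Rmin; repeat destruct Rle_dec; lra. Qed.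
Lemma clamp_0 : clamp 0 = 0.
Proof. unfold clamp, Rmax, Rmin; repeat destruct Rle_dec; lra. Qed.

Definition path {n} (j : nat) (s : R) : star n :=
  mk (if Rle_dec s 0 then (0%nat, 0) else (j, Rmin s 1)).

Lemma path_neg n j s : s <= 0 -> @path n j s = centre n.
Proof. intro; unfold path; destruct Rle_dec; [apply mk_centre|lra]. Qed.

Lemma path_pos n j s : (j < n)%nat -> 0 < s ->
  edge (@path n j s) = j /\ ps (@path n j s) = Rmin s 1.
Proof.
  intros Hj Hs; unfold path; destruct Rle_dec; [lra|].
  assert (0 < Rmin s 1 <= 1) by (unfold Rmin; destruct Rle_dec; lra).
  split; [apply mk_edge|apply mk_ps]; auto.
Qed.

Lemma path_dist n j s s' : (j < n)%nat ->
  star_dist (@path n j s) (@path n j s') <= Rabs (s - s').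
Proof.
  intros Hj.
  destruct (Rle_dec s 0); destruct (Rle_dec s' 0).
  - rewrite !path_neg by auto. rewrite dist_self. apply Rabs_pos.
  - rewrite (path_neg n j s) by auto. rewrite dist_centre_l.
    destruct (path_pos n j s') as [_ E]; auto; try lra. rewrite E.
    unfold Rmin, Rabs; destruct Rle_dec; destruct Rcase_abs; lra.
  - rewrite (path_neg n j s') by auto. rewrite dist_centre_r.
    destruct (path_pos n j s) as [_ E]; auto; try lra. rewrite E.
    unfold Rmin, Rabs; destruct Rle_dec; destruct Rcase_abs; lra.
  - destruct (path_pos n j s) as [E1 P1]; try lra; auto.
    destruct (path_pos n j s') as [E2 P2]; try lra; auto.
    rewrite dist_same by congruence. rewrite P1, P2.
    unfold Rmin, Rabs; repeat destruct Rle_dec; repeat destruct Rcase_abs; lra.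
Qed.

Lemma path_cont n j : (j < n)%nat -> Rcont (@path n j).
Proof.
  intros Hj s e He. exists e; split; auto. intros s' H.
  pose proof (path_dist n j s s' Hj). rewrite Rabs_minus_sym in H. lra.
Qed.

Lemma homeo_inj {n} (f : star n -> star n) : is_homeo f -> forall x y, f x = f y -> x = y.
Proof.
  intros [_ [g [_ [H1 H2]]]] x y E. rewrite <- (H1 x), <- (H1 y), E; auto.
Qed.

Lemma neg3 x y z : x * y < 0 -> y * z < 0 -> x * z < 0 -> False.
Proof. intros. assert (0 <= (x*y)*(y*z)*(x*z)) by (replace ((x*y)*(y*z)*(x*z)) with ((x*y*z)*(x*y*z)) by ring; nra). nra. Qed.

Theorem homeo_centre n (f : star n -> star n) : (3 <= n)%nat -> is_homeo f ->
  f (centre n) = centre n.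
Proof.
  intros Hn Hf.
  destruct (Req_dec (ps (f (centre n))) 0) as [Z|Z]; [apply pos0; auto|].
  exfalso. set (p := f (centre n)) in *.
  assert (Ht : 0 < ps p) by (pose proof (ps_range p); lra).
  assert (HC : forall j, (j < n)%nat -> Rcont (fun s => f (@path n j s))).
  { intros j Hj. apply Rcont_comp; [apply Hf|apply path_cont; auto]. }
  assert (H0 : forall j, @path n j 0 = centre n) by (intros; apply path_neg; lra).
  destruct (HC 0%nat ltac:(lia) 0 (ps p) Ht) as [d0 [Hd0 D0]].
  destruct (HC 1%nat ltac:(lia) 0 (ps p) Ht) as [d1 [Hd1 D1]].
  destruct (HC 2%nat ltac:(lia) 0 (ps p) Ht) as [d2 [Hd2 D2]].
  set (d := Rmin d0 (Rmin d1 d2) / 2).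
  assert (Hd : 0 < d) by (unfold d, Rmin; repeat destruct Rle_dec; lra).
  assert (Hdd : forall s, 0 <= s <= d -> Rabs (s - 0) < d0 /\ Rabs (s - 0) < d1 /\ Rabs (s - 0) < d2).
  { intros s Hs. rewrite Rminus_0_r, Rabs_right by lra. unfold d, Rmin in *;
    repeat destruct Rle_dec; lra. }
  assert (Dis : forall j k, (j < n)%nat -> (k < n)%nat -> j <> k ->
    forall s s', 0 < s <= d -> 0 < s' <= d -> f (@path n j s) <> f (@path n k s')).
  { intros j k Hj Hk Hjk s s' Hs Hs' E. apply (homeo_inj f Hf) in E.
    destruct (path_pos n j s) as [E1 _]; try lra; auto.
    destruct (path_pos n k s') as [E2 _]; try lra; auto.
    apply Hjk. rewrite <- E1, <- E2, E; auto. }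
  assert (NR : forall j, (j < n)%nat -> f (@path n j d) <> p).
  { intros j Hj E. apply (homeo_inj f Hf) in E.
    destruct (path_pos n j d) as [_ E2]; try lra; auto.
    rewrite E, ps_centre in E2. unfold Rmin in E2; destruct Rle_dec; lra. }
  assert (S01 := side (fun s => f (@path n 0 s)) (fun s => f (@path n 1 s)) p d
    (HC 0%nat ltac:(lia)) (HC 1%nat ltac:(lia)) Ht Hd).
  assert (S12 := side (fun s => f (@path n 1 s)) (fun s => f (@path n 2 s)) p d
    (HC 1%nat ltac:(lia)) (HC 2%nat ltac:(lia)) Ht Hd).
  assert (S02 := side (fun s => f (@path n 0 s)) (fun s => f (@path n 2 s)) p d
    (HC 0%nat ltac:(lia)) (HC 2%nat ltac:(lia)) Ht Hd).
  simpl in S01, S12, S02. rewrite !H0 in S01, S12, S02.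
  assert (B0 : forall s, 0 <= s <= d -> star_dist p (f (@path n 0 s)) < ps p).
  { intros s Hs. pose proof (D0 s (proj1 (Hdd s Hs))) as K. rewrite H0 in K. exact K. }
  assert (B1 : forall s, 0 <= s <= d -> star_dist p (f (@path n 1 s)) < ps p).
  { intros s Hs. pose proof (D1 s (proj1 (proj2 (Hdd s Hs)))) as K. rewrite H0 in K. exact K. }
  assert (B2 : forall s, 0 <= s <= d -> star_dist p (f (@path n 2 s)) < ps p).
  { intros s Hs. pose proof (D2 s (proj2 (proj2 (Hdd s Hs)))) as K. rewrite H0 in K. exact K. }
  eapply neg3; [apply S01|apply S12|apply S02]; auto;
    try (apply Dis; lia); apply NR; lia.
Qed.

Theorem homeo_end n (f : star n -> star n) (x : star n) : (3 <= n)%nat -> is_homeo f ->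
  ps x = 1 -> ps (f x) = 1.
Proof.
  intros Hn Hf Hx.
  pose proof (ps_range (f x)) as Rg.
  destruct (Req_dec (ps (f x)) 0) as [Z|Z].
  { apply pos0 in Z. rewrite <- (homeo_centre n f Hn Hf) in Z.
    apply (homeo_inj f Hf) in Z. subst x. rewrite ps_centre in Hx. lra. }
  destruct (Req_dec (ps (f x)) 1) as [O|O]; auto. exfalso.
  destruct Hf as [Hfc [g [Hg [Hgf Hfg]]]].
  assert (ginj : forall a b, g a = g b -> a = b).
  { intros a b E. rewrite <- (Hfg a), <- (Hfg b), E; auto. }
  set (q := f x) in *. set (t := ps q) in *. set (i := edge q).
  assert (Hi : (i < n)%nat) by (apply edge_lt; auto).
  set (u := Rmin t (1 - t) / 2).
  assert (Hu : 0 < u /\ u <= t / 2 /\ u <= (1 - t) / 2)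
    by (unfold u, Rmin; destruct Rle_dec; lra).
  set (up := fun s => @mk n (i, t + u * clamp s)).
  set (dn := fun s => @mk n (i, t - u * clamp s)).
  assert (Vup : forall s, edge (up s) = i /\ ps (up s) = t + u * clamp s).
  { intro s; pose proof (clamp_range s). unfold up; split; [apply mk_edge|apply mk_ps]; auto; nra. }
  assert (Vdn : forall s, edge (dn s) = i /\ ps (dn s) = t - u * clamp s).
  { intro s; pose proof (clamp_range s). unfold dn; split; [apply mk_edge|apply mk_ps]; auto; nra. }
  assert (Cup : Rcont up).
  { intros s e He. exists e; split; auto. intros s' Hs'.
    destruct (Vup s) as [E1 P1], (Vup s') as [E2 P2].
    rewrite dist_same by congruence. rewrite P1, P2.
    pose proof (clamp_lip s s'). rewrite Rabs_minus_sym in Hs'.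
    replace (t + u * clamp s - (t + u * clamp s')) with (u * (clamp s - clamp s')) by ring.
    rewrite Rabs_mult, (Rabs_right u) by lra. pose proof (Rabs_pos (clamp s - clamp s')). nra. }
  assert (Cdn : Rcont dn).
  { intros s e He. exists e; split; auto. intros s' Hs'.
    destruct (Vdn s) as [E1 P1], (Vdn s') as [E2 P2].
    rewrite dist_same by congruence. rewrite P1, P2.
    pose proof (clamp_lip s s'). rewrite Rabs_minus_sym in Hs'.
    replace (t - u * clamp s - (t - u * clamp s')) with (- (u * (clamp s - clamp s'))) by ring.
    rewrite Rabs_Ropp, Rabs_mult, (Rabs_right u) by lra. pose proof (Rabs_pos (clamp s - clamp s')). nra. }
  assert (U0 : up 0 = q).
  { apply pt_eq2; destruct (Vup 0) as [E1 P1]; auto. rewrite P1, clamp_0; fold t; ring. }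
  assert (D0 : dn 0 = q).
  { apply pt_eq2; destruct (Vdn 0) as [E1 P1]; auto. rewrite P1, clamp_0; fold t; ring. }
  set (G1 := fun s => g (up s)). set (G2 := fun s => g (dn s)).
  assert (C1 : Rcont G1) by (apply (Rcont_comp g up); auto).
  assert (C2 : Rcont G2) by (apply (Rcont_comp g dn); auto).
  assert (G10 : G1 0 = x) by (unfold G1; rewrite U0; unfold q; auto).
  assert (G20 : G2 0 = x) by (unfold G2; rewrite D0; unfold q; auto).
  assert (Hx1 : 0 < ps x) by lra.
  destruct (C1 0 (ps x) Hx1) as [d1 [Hd1 B1]].
  destruct (C2 0 (ps x) Hx1) as [d2 [Hd2 B2]].
  rewrite G10 in B1. rewrite G20 in B2.
  set (d := Rmin d1 d2 / 2).
  assert (Hd : 0 < d) by (unfold d, Rmin; destruct Rle_dec; lra).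
  assert (Hdd : forall s, 0 <= s <= d -> Rabs (s - 0) < d1 /\ Rabs (s - 0) < d2).
  { intros s Hs. rewrite Rminus_0_r, Rabs_right by lra. unfold d, Rmin in *;
    repeat destruct Rle_dec; lra. }
  assert (S := side G1 G2 x d C1 C2 Hx1 Hd G10 G20).
  assert (P1 : (ps (G1 d) - ps x) <= 0) by (pose proof (ps_range (G1 d)); lra).
  assert (P2 : (ps (G2 d) - ps x) <= 0) by (pose proof (ps_range (G2 d)); lra).
  assert (Pr : 0 <= (ps (G1 d) - ps x) * (ps (G2 d) - ps x)) by nra.
  assert (Pd : 0 < clamp d) by (apply clamp_pos; auto).
  enough ((ps (G1 d) - ps x) * (ps (G2 d) - ps x) < 0) by lra.
  apply S.
  - intros s Hs; apply B1, Hdd; auto.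
  - intros s Hs; apply B2, Hdd; auto.
  - intros s s' Hs Hs' E. unfold G1, G2 in E. apply ginj in E.
    pose proof (clamp_pos s (proj1 Hs)). pose proof (clamp_pos s' (proj1 Hs')).
    destruct (Vup s) as [_ P], (Vdn s') as [_ P']. rewrite E in P. nra.
  - intro E. unfold G1 in E. rewrite <- G10 in E. unfold G1 in E. apply ginj in E.
    rewrite U0 in E. destruct (Vup d) as [_ P]. rewrite E in P. fold t in P. nra.
  - intro E. unfold G2 in E. rewrite <- G20 in E. unfold G2 in E. apply ginj in E.
    rewrite D0 in E. destruct (Vdn d) as [_ P]. rewrite E in P. fold t in P. nra.
Qed.

Lemma open_gt {n} r : is_open (fun x : star n => r < ps x).
Proof.
  intros x Hx. exists (ps x - r); split; [lra|]. intros y Hy.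
  pose proof (ps_lip x y). unfold Rabs in H; destruct Rcase_abs; lra.
Qed.

Lemma chain2 n (G : (star n -> star n) -> Prop) : (3 <= n)%nat -> is_subgroup G -> has_chain G 2.
Proof.
  intros Hn [HG _].
  exists (fun i (x : star n) => match i with 0%nat => ps x = 0
                   | 1%nat => ps x = 0 \/ ps x = 1 | _ => True end).
  split; [|split].
  - intros i Hi. destruct i as [|[|[|i]]]; try lia; split.
    + split. exists (centre n); reflexivity.
      intros g y Hg Hy. apply pos0 in Hy; subst. rewrite homeo_centre; auto.
    + intros x Hx. exists (ps x); split. pose proof (ps_range x); lra.
      intros y Hy. pose proof (ps_lip x y). pose proof (ps_range x).
      unfold Rabs in H; destruct Rcase_abs; lra.
    + split. exists (centre n); left; reflexivity.
      intros g y Hg [Hy|Hy].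
      * left. apply pos0 in Hy; subst. rewrite homeo_centre; auto.
      * right. apply homeo_end; auto.
    + intros x Hx. pose proof (ps_range x).
      exists (Rmin (ps x) (1 - ps x)); split. unfold Rmin; destruct Rle_dec; lra.
      intros y Hy. pose proof (ps_lip x y).
      unfold Rabs, Rmin in *; destruct Rcase_abs; destruct Rle_dec; lra.
    + split. exists (centre n); auto. auto.
    + intros x Hx; tauto.
  - intros i Hi. destruct i as [|[|i]]; try lia; split.
    + tauto.
    + exists (@mk n (0%nat, 1)). rewrite mk_ps by (lia || lra). split; [right; auto|lra].
    + auto.
    + exists (@mk n (0%nat, /2)). rewrite mk_ps by (lia || lra). split; [auto|lra].
  - auto.
Qed.

Lemma forward n h : (3 <= n)%nat -> P_h n h -> h = Inf \/ exists k, h = Fin k /\ (2 <= k)%nat.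
Proof.
  intros Hn [G [HG Hh]]. destruct h as [k|]; [right|left; auto].
  exists k; split; auto. destruct Hh as [_ Hh]. apply Hh, chain2; auto.
Qed.

Lemma id_cont {n} : is_continuous (fun x : star n => x).
Proof. intros x e He. exists e; split; auto. Qed.

Lemma P_inf n : (1 <= n)%nat -> P_h n Inf.
Proof.
  intros Hn. exists (fun f : star n -> star n => forall x, f x = x). split.
  - split; [|split; [|split]].
    + intros f Hf. split.
      * intros x e He. exists e; split; auto. intros y Hy. rewrite !Hf; auto; fail.
      * exists (fun x => x). repeat split; intros; rewrite ?Hf; auto; apply id_cont.
    + auto.
    + intros f g Hf Hg x. rewrite Hg, Hf; auto.
    + intros f Hf. exists (fun x => x). repeat split; intros; rewrite ?Hf; auto.
  - intros m. exists (S m); split; [lia|].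
    assert (Hm : 0 < INR (S m)) by (apply lt_0_INR; lia).
    exists (fun i (x : star n) => ps x <= INR i / INR (S m)). split; [|split].
    + intros i Hi. split; [split|].
      * exists (centre n). rewrite ps_centre. apply Rmult_le_pos; [apply pos_INR|].
        left; apply Rinv_0_lt_compat; auto.
      * intros g y Hg Hy. rewrite Hg; auto.
      * intros x Hx. apply Rnot_le_lt in Hx. destruct (open_gt (n:=n) (INR i / INR (S m)) x Hx) as [e [He H]]. exists e; split; auto. intros y Hy; apply Rlt_not_le, H; auto.
    + intros i Hi. split.
      * intros x Hx. eapply Rle_trans; [apply Hx|]. unfold Rdiv.
        apply Rmult_le_compat_r; [left; apply Rinv_0_lt_compat; auto|]. apply le_INR; lia.
      * assert (A : 0 < INR (S i) / INR (S m) <= 1).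
        { split. apply Rdiv_lt_0_compat; auto. apply lt_0_INR; lia.
          apply Rmult_le_reg_r with (INR (S m)); auto. unfold Rdiv.
          rewrite Rmult_assoc, Rinv_l by lra. rewrite Rmult_1_r, Rmult_1_l. apply le_INR; lia. }
        exists (@mk n (0%nat, INR (S i) / INR (S m))). rewrite mk_ps by (auto || lia).
        split; [lra|]. intro H. 
        assert (INR (S i) <= INR i).
        { apply Rmult_le_reg_r with (/ INR (S m)). apply Rinv_0_lt_compat; auto. apply H. }
        rewrite S_INR in H0. lra.
    + intros x. unfold Rdiv. rewrite Rinv_r by lra. apply ps_range.
Qed.

Lemma homeo_id {n} : is_homeo (fun x : star n => x).
Proof.
  split. intros x e He; exists e; split; auto.
  exists (fun x => x). repeat split; auto. intros x e He; exists e; split; auto.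
Qed.

Lemma cont_comp {n} (f g : star n -> star n) :
  is_continuous f -> is_continuous g -> is_continuous (fun x => f (g x)).
Proof.
  intros Hf Hg x e He. destruct (Hf (g x) e He) as [d1 [Hd1 H1]].
  destruct (Hg x d1 Hd1) as [d2 [Hd2 H2]]. exists d2; split; auto.
Qed.

Lemma homeo_comp {n} (f g : star n -> star n) :
  is_homeo f -> is_homeo g -> is_homeo (fun x => f (g x)).
Proof.
  intros [Cf [f' [Cf' [F1 F2]]]] [Cg [g' [Cg' [G1 G2]]]]. split.
  apply cont_comp; auto.
  exists (fun x => g' (f' x)). split. apply cont_comp; auto.
  split; intros x. rewrite F1, G1; auto. rewrite G2, F2; auto.
Qed.

Fixpoint cnt (P : nat -> Prop) (k : nat) : nat :=
  match k with
  | O => if excluded_middle_informative (P O) then 1%nat else 0%nat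
  | S k' => (cnt P k' + if excluded_middle_informative (P (S k')) then 1%nat else 0%nat)%nat
  end.

Lemma cnt_le P Q k : (forall j, (j <= k)%nat -> P j -> Q j) -> (cnt P k <= cnt Q k)%nat.
Proof.
  induction k; intros H; simpl.
  - destruct (excluded_middle_informative (P 0%nat)), (excluded_middle_informative (Q 0%nat));
    try lia. exfalso; apply n; apply H; auto.
  - assert (IH := IHk (fun j Hj => H j ltac:(lia))).
    destruct (excluded_middle_informative (P (S k))), (excluded_middle_informative (Q (S k)));
    try lia. exfalso; apply n; apply H; auto.
Qed.

Lemma cnt_lt P Q k : (forall j, (j <= k)%nat -> P j -> Q j) ->
  (exists j, (j <= k)%nat /\ Q j /\ ~ P j) -> (cnt P k < cnt Q k)%nat.
Proof.
  induction k; intros H [j [Hj [Qj Pj]]]; simpl.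
  - assert (j = 0%nat) by lia; subst.
    destruct (excluded_middle_informative (P 0%nat)), (excluded_middle_informative (Q 0%nat));
    tauto || lia.
  - destruct (Nat.eq_dec j (S k)).
    + subst. pose proof (cnt_le P Q k (fun j Hj => H j ltac:(lia))).
      destruct (excluded_middle_informative (P (S k))), (excluded_middle_informative (Q (S k)));
      tauto || lia.
    + assert (Hjk : (j <= k)%nat) by lia.
      assert (IH := IHk (fun j Hj => H j ltac:(lia)) (ex_intro _ j (conj Hjk (conj Qj Pj)))).
      destruct (excluded_middle_informative (P (S k))), (excluded_middle_informative (Q (S k)));
      try lia. exfalso; match goal with h : ~ Q _ |- _ => apply h end; apply H; auto.
Qed.

Lemma cnt_bound P k : (cnt P k <= S k)%nat.
Proof.
  induction k; simpl; destruct excluded_middle_informative; lia.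
Qed.

Lemma cnt_pos P k : (exists j, (j <= k)%nat /\ P j) -> (1 <= cnt P k)%nat.
Proof.
  intros H. assert (cnt (fun _ => False) k < cnt P k)%nat; [|lia].
  apply cnt_lt. tauto. destruct H as [j [? ?]]; exists j; tauto.
Qed.

Definition Gof {n} (Lv : star n -> nat -> Prop) (f : star n -> star n) : Prop :=
  is_homeo f /\ forall x j, Lv x j <-> Lv (f x) j.

Lemma Gof_subgroup {n} (Lv : star n -> nat -> Prop) : is_subgroup (Gof Lv).
Proof.
  split; [|split; [|split]].
  - intros f [H _]; auto.
  - split. apply homeo_id. tauto.
  - intros f g [Hf Lf] [Hg Lg]. split. apply homeo_comp; auto.
    intros x j. rewrite Lg, Lf; tauto.
  - intros f [Hf Lf]. destruct Hf as [Cf [g [Cg [E1 E2]]]].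
    exists g. split; [|split; auto]. split.
    + split; auto. exists f; split; auto.
    + intros x j. rewrite (Lf (g x) j), E2; tauto.
Qed.

Theorem gen_height n (Lv : star n -> nat -> Prop) k :
  (forall x j j', Lv x j -> Lv x j' -> j = j') ->
  (forall x, exists j, (j <= k)%nat /\ Lv x j) ->
  (forall j, (j <= k)%nat -> exists x, Lv x j) ->
  (forall x j, Lv x j -> exists e, 0 < e /\ forall y j', star_dist x y < e -> Lv y j' -> (j <= j')%nat) ->
  (forall x y j, Lv x j -> Lv y j -> exists f, Gof Lv f /\ f x = y) ->
  P_h n (Fin k).
Proof.
  intros HF HT HS HL HTR. exists (Gof Lv). split; [apply Gof_subgroup|split].
  - exists (fun i x => exists j, (j <= i)%nat /\ Lv x j). split; [|split].
    + intros i Hi. split; [split|].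
      * destruct (HS 0%nat ltac:(lia)) as [x Hx]. exists x, 0%nat; split; auto; lia.
      * intros g y [_ Hg] [j [Hj Hy]]. exists j; split; auto. apply (proj1 (Hg y j)); auto.
      * intros x Hx. destruct (HT x) as [j0 [Hj0 Lx]].
        assert (Hj0i : (i < j0)%nat).
        { destruct (Nat.lt_ge_cases i j0); auto. exfalso; apply Hx; exists j0; split; auto. }
        destruct (HL x j0 Lx) as [e [He H]]. exists e; split; auto.
        intros y Hy [j [Hj Ly]]. specialize (H y j Hy Ly). lia.
    + intros i Hi. split.
      * intros x [j [Hj Lx]]. exists j; split; auto.
      * destruct (HS (S i) ltac:(lia)) as [x Hx]. exists x. split. exists (S i); split; auto.
        intros [j [Hj Lx]]. specialize (HF x _ _ Hx Lx). lia.
    + intros x. destruct (HT x) as [j [? ?]]; exists j; auto.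
  - intros m [Y [HCI [HSt HFull]]].
    assert (Sat : forall i x y j, (i <= m)%nat -> Y i x -> Lv x j -> Lv y j -> Y i y).
    { intros i x y j Hi Yx Lx Ly. destruct (HTR x y j Lx Ly) as [f [Gf Ef]].
      destruct (HCI i Hi) as [[_ Inv] _]. rewrite <- Ef. apply Inv; auto. }
    assert (Cnt : forall i, (i <= m)%nat ->
      (S i <= cnt (fun j => exists x, Y i x /\ Lv x j) k)%nat).
    { induction i; intros Hi.
      - apply cnt_pos. destruct (HCI 0%nat ltac:(lia)) as [[[x Hx] _] _].
        destruct (HT x) as [j [Hj Lx]]. exists j; split; eauto.
      - specialize (IHi ltac:(lia)). eapply Nat.lt_le_trans; [|apply cnt_lt].
        + apply -> Nat.succ_lt_mono. apply IHi.
        + destruct (HSt i ltac:(lia)) as [Sub _]. intros j _ [x [Yx Lx]]. exists x; auto.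
        + destruct (HSt i ltac:(lia)) as [_ [x [Yx NYx]]].
          destruct (HT x) as [j [Hj Lx]]. exists j. split; auto. split; eauto.
          intros [x' [Yx' Lx']]. apply NYx. apply (Sat i x' x j); auto; lia. }
    specialize (Cnt m (le_n m)). pose proof (cnt_bound (fun j => exists x, Y m x /\ Lv x j) k).
    lia.
Qed.

Definition good1 (h : R -> R) : Prop :=
  (forall t, 0 <= t <= 1 -> 0 <= h t <= 1) /\ h 0 = 0 /\
  exists L, 0 < L /\ forall s t, 0 <= s <= 1 -> 0 <= t <= 1 -> Rabs (h s - h t) <= L * Rabs (s - t).

Definition goodpair (h h' : R -> R) : Prop :=
  good1 h /\ good1 h' /\ (forall t, 0 <= t <= 1 -> h' (h t) = t) /\ (forall t, 0 <= t <= 1 -> h (h' t) = t).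

Lemma goodpair_sym h h' : goodpair h h' -> goodpair h' h.
Proof. unfold goodpair; tauto. Qed.

Lemma goodpair_pos h h' t : goodpair h h' -> 0 < t <= 1 -> 0 < h t <= 1.
Proof.
  intros [[R1 [Z1 _]] [[R2 [Z2 _]] [I1 I2]]] Ht.
  specialize (R1 t ltac:(lra)). split; [|lra].
  destruct (Req_dec (h t) 0) as [E|E]; [|lra].
  assert (h' (h t) = t) by (apply I1; lra). rewrite E, Z2 in H. lra.
Qed.

Lemma goodpair_comp h1 h1' h2 h2' : goodpair h1 h1' -> goodpair h2 h2' ->
  goodpair (fun t => h2 (h1 t)) (fun t => h1' (h2' t)).
Proof.
  intros [[A1 [B1 [L1 [HL1 C1]]]] [[A1' [B1' [L1' [HL1' C1']]]] [I1 J1]]]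
         [[A2 [B2 [L2 [HL2 C2]]]] [[A2' [B2' [L2' [HL2' C2']]]] [I2 J2]]].
  split; [|split; [|split]].
  - split; [intros; apply A2, A1; auto|split; [rewrite B1, B2; auto|]].
    exists (L2 * L1); split; [nra|]. intros s t Hs Ht.
    eapply Rle_trans; [apply C2; apply A1; auto|].
    rewrite Rmult_assoc. apply Rmult_le_compat_l; [lra|]. apply C1; auto.
  - split; [intros; apply A1', A2'; auto|split; [rewrite B2', B1'; auto|]].
    exists (L1' * L2'); split; [nra|]. intros s t Hs Ht.
    eapply Rle_trans; [apply C1'; apply A2'; auto|].
    rewrite Rmult_assoc. apply Rmult_le_compat_l; [lra|]. apply C2'; auto.
  - intros t Ht. rewrite I2 by (apply A1; auto). apply I1; auto.
  - intros t Ht. rewrite J1 by (apply A2'; auto). apply J2; auto.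
Qed.

Definition swap (a b i : nat) : nat :=
  if Nat.eqb i a then b else if Nat.eqb i b then a else i.

Lemma swap_lt a b i n : (a < n)%nat -> (b < n)%nat -> (i < n)%nat -> (swap a b i < n)%nat.
Proof. unfold swap; destruct (Nat.eqb_spec i a), (Nat.eqb_spec i b); lia. Qed.
Lemma swap_inv a b i : swap a b (swap a b i) = i.
Proof. unfold swap. destruct (Nat.eqb_spec i a).
- subst. destruct (Nat.eqb_spec b a). subst. reflexivity. rewrite Nat.eqb_refl. reflexivity.
- destruct (Nat.eqb_spec i b). subst. rewrite Nat.eqb_refl. destruct (Nat.eqb_spec a b); subst; reflexivity.
  apply Nat.eqb_neq in n. apply Nat.eqb_neq in n0. rewrite n, n0. reflexivity.
Qed.
Lemma swap_inj a b i j : swap a b i = swap a b j -> i = j.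
Proof. intro E. rewrite <- (swap_inv a b i), <- (swap_inv a b j), E; auto. Qed.
Lemma swap_a a b : swap a b a = b.
Proof. unfold swap; rewrite Nat.eqb_refl; auto. Qed.

Definition Phi {n} (a b : nat) (h : R -> R) (x : star n) : star n :=
  if Req_EM_T (ps x) 0 then centre n else mk (swap a b (edge x), h (ps x)).

Lemma Phi_props {n} a b h h' (x : star n) : (a < n)%nat -> (b < n)%nat -> goodpair h h' ->
  ps (Phi a b h x) = h (ps x) /\ (0 < ps x -> edge (Phi a b h x) = swap a b (edge x)).
Proof.
  intros Ha Hb Hg. unfold Phi. destruct (Req_EM_T (ps x) 0) as [E|E].
  - rewrite E, ps_centre. destruct Hg as [[_ [Z _]] _]. split; [auto|lra].
  - pose proof (ps_range x). assert (Hp : 0 < ps x <= 1) by lra.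
    pose proof (goodpair_pos h h' _ Hg Hp).
    assert (Hs : (swap a b (edge x) < n)%nat) by (apply swap_lt; auto; apply edge_lt; auto).
    split; [apply mk_ps|intros; apply mk_edge]; auto.
Qed.

Lemma Phi_lip {n} a b h h' (x y : star n) : (a < n)%nat -> (b < n)%nat -> goodpair h h' ->
  exists L, 0 < L /\ forall x y : star n, star_dist (Phi a b h x) (Phi a b h y) <= L * star_dist x y.
Proof.
  intros Ha Hb Hg. pose proof Hg as [[R1 [Z1 [L [HL C]]]] _]. exists L; split; auto.
  intros x' y'.
  destruct (Phi_props a b h h' x' Ha Hb Hg) as [P1 E1].
  destruct (Phi_props a b h h' y' Ha Hb Hg) as [P2 E2].
  pose proof (ps_range x'); pose proof (ps_range y').
  destruct (Req_dec (ps x') 0) as [X|X].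
  { apply pos0 in X; subst x'. rewrite dist_centre_l.
    assert (Phi a b h (centre n) = centre n) by (apply pos0; rewrite P1, ps_centre; auto).
    rewrite H1, dist_centre_l, P2. rewrite ps_centre in *.
    specialize (C (ps y') 0 ltac:(lra) ltac:(lra)). rewrite Z1, Rminus_0_r, Rminus_0_r in C.
    rewrite Rabs_right in C by (apply Rle_ge; apply R1; lra). rewrite Rabs_right in C by lra. auto. }
  destruct (Req_dec (ps y') 0) as [Y|Y].
  { apply pos0 in Y; subst y'. rewrite dist_centre_r.
    assert (Phi a b h (centre n) = centre n) by (apply pos0; rewrite P2, ps_centre; auto).
    rewrite H1, dist_centre_r, P1. rewrite ps_centre in *.
    specialize (C (ps x') 0 ltac:(lra) ltac:(lra)). rewrite Z1, Rminus_0_r, Rminus_0_r in C.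
    rewrite Rabs_right in C by (apply Rle_ge; apply R1; lra). rewrite Rabs_right in C by lra. auto. }
  specialize (E1 ltac:(lra)). specialize (E2 ltac:(lra)).
  destruct (Nat.eq_dec (edge x') (edge y')) as [E|E].
  - rewrite !dist_same by (rewrite ?E1, ?E2, ?E; auto). rewrite P1, P2. apply C; lra.
  - rewrite !dist_diff; auto. 2: { rewrite E1, E2. intro F; apply E; eapply swap_inj; eauto. }
    rewrite P1, P2.
    pose proof (C (ps x') 0 ltac:(lra) ltac:(lra)). pose proof (C (ps y') 0 ltac:(lra) ltac:(lra)).
    rewrite Z1, !Rminus_0_r in H1, H2.
    pose proof (R1 (ps x') ltac:(lra)). pose proof (R1 (ps y') ltac:(lra)).
    rewrite Rabs_right in H1, H2 by lra. rewrite Rabs_right in H1 by lra.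
    rewrite Rabs_right in H2 by lra. lra.
Qed.

Lemma Phi_cont {n} a b h h' : (a < n)%nat -> (b < n)%nat -> goodpair h h' ->
  is_continuous (@Phi n a b h).
Proof.
  intros Ha Hb Hg x e He. destruct (Phi_lip a b h h' x x Ha Hb Hg) as [L [HL C]].
  exists (e / L); split. apply Rdiv_lt_0_compat; auto.
  intros y Hy. eapply Rle_lt_trans; [apply C|].
  apply Rmult_lt_reg_l with (/ L). apply Rinv_0_lt_compat; auto.
  rewrite <- Rmult_assoc, Rinv_l, Rmult_1_l by lra. unfold Rdiv in Hy. lra.
Qed.

Lemma Phi_inv {n} a b h h' (x : star n) : (a < n)%nat -> (b < n)%nat -> goodpair h h' ->
  Phi a b h' (Phi a b h x) = x.
Proof.
  intros Ha Hb Hg. pose proof (goodpair_sym _ _ Hg) as Hg'.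
  destruct (Phi_props a b h h' x Ha Hb Hg) as [P1 E1].
  destruct (Phi_props a b h' h (Phi a b h x) Ha Hb Hg') as [P2 E2].
  pose proof (ps_range x).
  pose proof Hg as [_ [_ [I1 _]]].
  destruct (Req_dec (ps x) 0) as [X|X].
  - rewrite (pos0 x X) at 2. apply pos0. rewrite P2, P1, I1; lra.
  - apply pt_eq2.
    + rewrite E2, E1, swap_inv; auto; try lra. rewrite P1. apply (goodpair_pos h h'); auto.
      lra.
    + rewrite P2, P1, I1; lra.
Qed.

Lemma Phi_homeo {n} a b h h' : (a < n)%nat -> (b < n)%nat -> goodpair h h' ->
  is_homeo (@Phi n a b h).
Proof.
  intros Ha Hb Hg. split. apply (Phi_cont a b h h'); auto.
  exists (Phi a b h'). split. apply (Phi_cont a b h' h); auto. apply goodpair_sym; auto.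
  split; intros x. apply Phi_inv; auto.
  apply (Phi_inv a b h' h); auto. apply goodpair_sym; auto.
Qed.

Definition pres (LT : R -> nat -> Prop) (h : R -> R) : Prop :=
  forall s j, 0 < s <= 1 -> LT s j -> LT (h s) j.

Theorem pos_height n (LT : R -> nat -> Prop) k : (1 <= n)%nat ->
  (forall t j j', LT t j -> LT t j' -> j = j') ->
  (forall t j, LT t j -> (1 <= j)%nat) ->
  (forall t, 0 < t <= 1 -> exists j, (j <= k)%nat /\ LT t j) ->
  (forall j, (1 <= j <= k)%nat -> exists t, 0 < t <= 1 /\ LT t j) ->
  (forall t j, 0 < t <= 1 -> LT t j -> exists e, 0 < e /\
      forall s j', 0 < s <= 1 -> Rabs (s - t) < e -> LT s j' -> (j <= j')%nat) ->
  (forall t t' j, 0 < t <= 1 -> 0 < t' <= 1 -> LT t j -> LT t' j ->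
      exists h h', goodpair h h' /\ pres LT h /\ pres LT h' /\ h t = t') ->
  P_h n (Fin k).
Proof.
  intros Hn HF H1 HT HS HL HTR.
  apply (gen_height n (fun x j => (ps x = 0 /\ j = 0%nat) \/ (0 < ps x /\ LT (ps x) j))).
  - intros x j j' [[A B]|[A B]] [[C D]|[C D]]; subst; auto; try lra. eauto.
  - intros x. pose proof (ps_range x). destruct (Req_dec (ps x) 0).
    + exists 0%nat; split; [lia|left; auto].
    + destruct (HT (ps x)) as [j [? ?]]; [lra|]. exists j; split; auto. right; split; auto; lra.
  - intros j Hj. destruct j as [|j].
    + exists (centre n); left; auto.
    + destruct (HS (S j)) as [t [Ht Lt]]; [lia|]. exists (@mk n (0%nat, t)).
      right. rewrite mk_ps by (auto || lia). split; [lra|auto].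
  - intros x j [[A B]|[A B]].
    + subst. exists 1; split; [lra|]. intros; lia.
    + pose proof (ps_range x). destruct (HL (ps x) j) as [e [He HH]]; [lra|auto|].
      exists (Rmin e (ps x)); split. unfold Rmin; destruct Rle_dec; lra.
      intros y j' Hy [[C D]|[C D]].
      * exfalso. assert (star_dist x y < ps x) by (unfold Rmin in Hy; destruct Rle_dec; lra).
        destruct (dist_lt_ps x y) as [_ P]; auto. lra.
      * pose proof (ps_range y). apply (HH (ps y)); auto; try lra.
        pose proof (ps_lip x y) as PL. rewrite Rabs_minus_sym in PL.
        unfold Rmin in Hy; destruct Rle_dec; lra.
  - intros x y j [[A B]|[A B]] [[C D]|[C D]]; subst.
    + exists (fun z => z). split. split. apply homeo_id. tauto.
      rewrite (pos0 x A), (pos0 y C); auto.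
    + apply H1 in D; lia.
    + apply H1 in B; lia.
    + pose proof (ps_range x); pose proof (ps_range y).
      destruct (HTR (ps x) (ps y) j) as [h [h' [Hg [Ph [Ph' E]]]]]; auto; try lra.
      assert (Ea : (edge x < n)%nat) by (apply edge_lt; lra).
      assert (Eb : (edge y < n)%nat) by (apply edge_lt; lra).
      exists (Phi (edge x) (edge y) h). split; [split|].
      * apply (Phi_homeo _ _ h h'); auto.
      * intros z j0. destruct (Phi_props (edge x) (edge y) h h' z Ea Eb Hg) as [P _].
        pose proof (ps_range z). destruct (Req_dec (ps z) 0) as [Z|Z].
        -- rewrite P, Z. destruct Hg as [[_ [Z0 _]] _]. rewrite Z0.
           split; intros [[? ?]|[? ?]]; (left; split; auto; lra) || lra.
        -- assert (Hz : 0 < ps z <= 1) by lra.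
           pose proof (goodpair_pos h h' _ Hg Hz). rewrite P.
           split; intros [[? ?]|[? ?]]; try lra.
           ++ right; split; [lra|]. apply Ph; auto.
           ++ right; split; [lra|]. destruct Hg as [_ [_ [I _]]].
              rewrite <- (I (ps z)) by lra. apply Ph'; auto.
      * destruct (Phi_props (edge x) (edge y) h h' x Ea Eb Hg) as [P Ed].
        apply pt_eq2. rewrite Ed, swap_a; auto. rewrite P; auto.
Qed.

Definition lipon (f : R -> R) (L p q : R) : Prop :=
  forall s t, p <= s <= q -> p <= t <= q -> Rabs (f s - f t) <= L * Rabs (s - t).

Lemma lip_glue f L p q r : 0 <= L -> lipon f L p q -> lipon f L q r -> p <= q <= r -> lipon f L p r.
Proof.
  intros HL H1 H2 Hq s t Hs Ht.
  assert (K : forall s t, p <= s <= q -> q <= t <= r -> Rabs (f s - f t) <= L * Rabs (s - t)).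
  { clear s t Hs Ht. intros s t Hs Ht.
    pose proof (H1 s q Hs ltac:(lra)). pose proof (H2 q t ltac:(lra) Ht).
    pose proof (Rabs_triang (f s - f q) (f q - f t)).
    replace (f s - f q + (f q - f t)) with (f s - f t) in H3 by ring.
    rewrite (Rabs_left1 (s - q)) in H by lra. rewrite (Rabs_left1 (q - t)) in H0 by lra.
    rewrite (Rabs_left1 (s - t)) by lra. nra. }
  destruct (Rle_dec s q), (Rle_dec t q).
  - apply H1; lra.
  - apply K; lra.
  - rewrite Rabs_minus_sym, (Rabs_minus_sym s). apply K; lra.
  - apply H2; lra.
Qed.

Lemma lip_lin f L c m p q : (forall t, p <= t <= q -> f t = c + m * t) -> Rabs m <= L -> lipon f L p q.
Proof.
  intros H Hm s t Hs Ht. rewrite H, H by auto.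
  replace (c + m * s - (c + m * t)) with (m * (s - t)) by ring.
  rewrite Rabs_mult. apply Rmult_le_compat_r; auto. apply Rabs_pos.
Qed.

Lemma lip_mono f L L' p q : L <= L' -> lipon f L p q -> lipon f L' p q.
Proof.
  intros HL H s t Hs Ht. eapply Rle_trans; [apply H; auto|].
  apply Rmult_le_compat_r; auto. apply Rabs_pos.
Qed.

Definition pl (a c x y t : R) : R :=
  if Rle_dec t a then t
  else if Rle_dec t x then a + (t - a) * ((y - a) / (x - a))
  else if Rle_dec t c then y + (t - x) * ((c - y) / (c - x))
  else t.

Lemma pl_range a c x y t : a < x < c -> a < y < c -> a < t < c -> a < pl a c x y t < c.
Proof.
  intros Hx Hy Ht. unfold pl.
  assert (A1 : 0 < (y - a) / (x - a)) by (apply Rdiv_lt_0_compat; lra).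
  assert (A2 : 0 < (c - y) / (c - x)) by (apply Rdiv_lt_0_compat; lra).
  assert (B1 : (x - a) * ((y - a) / (x - a)) = y - a) by (field; lra).
  assert (B2 : (c - x) * ((c - y) / (c - x)) = c - y) by (field; lra).
  destruct (Rle_dec t a); [lra|]. destruct (Rle_dec t x).
  - split; nra.
  - destruct (Rle_dec t c); [|lra]. split; nra.
Qed.

Lemma pl_out a c x y t : ~ (a < t < c) -> a < x < c -> pl a c x y t = t.
Proof.
  intros Ht Hx. unfold pl. destruct (Rle_dec t a); auto. destruct (Rle_dec t x); [lra|].
  destruct (Rle_dec t c); auto. assert (t = c) by lra. subst. field. lra.
Qed.

Lemma pl_at a c x y : a < x < c -> pl a c x y x = y.
Proof.
  intros Hx. unfold pl. destruct (Rle_dec x a); [lra|]. destruct (Rle_dec x x); [|lra].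
  field; lra.
Qed.

Lemma pl_inv a c x y t : a < x < c -> a < y < c -> pl a c y x (pl a c x y t) = t.
Proof.
  intros Hx Hy. destruct (Rlt_dec a t) as [H1|H1]; [destruct (Rlt_dec t c) as [H2|H2]|].
  2,3: rewrite (pl_out a c x y t), (pl_out a c y x t); auto; lra.
  assert (A1 : 0 < (y - a) / (x - a)) by (apply Rdiv_lt_0_compat; lra).
  assert (A2 : 0 < (c - y) / (c - x)) by (apply Rdiv_lt_0_compat; lra).
  assert (B1 : (x - a) * ((y - a) / (x - a)) = y - a) by (field; lra).
  assert (B2 : (c - x) * ((c - y) / (c - x)) = c - y) by (field; lra).
  unfold pl at 2. destruct (Rle_dec t a); [lra|]. destruct (Rle_dec t x).
  - unfold pl. destruct (Rle_dec (a + (t - a) * ((y - a) / (x - a))) a); [nra|].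
    destruct (Rle_dec (a + (t - a) * ((y - a) / (x - a))) y); [|nra]. field; lra.
  - destruct (Rle_dec t c); [|lra]. unfold pl.
    destruct (Rle_dec (y + (t - x) * ((c - y) / (c - x))) a); [nra|].
    destruct (Rle_dec (y + (t - x) * ((c - y) / (c - x))) y); [nra|].
    destruct (Rle_dec (y + (t - x) * ((c - y) / (c - x))) c); [|nra]. field; lra.
Qed.

Lemma pl_good1 a c x y : 0 <= a -> c <= 1 -> a < x < c -> a < y < c -> good1 (pl a c x y).
Proof.
  intros Ha Hc Hx Hy. split; [|split].
  - intros t Ht. destruct (Rlt_dec a t) as [H1|H1]; [destruct (Rlt_dec t c) as [H2|H2]|].
    + pose proof (pl_range a c x y t Hx Hy ltac:(lra)). lra.
    + rewrite pl_out; auto; lra.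
    + rewrite pl_out; auto; lra.
  - apply pl_out; auto; lra.
  - set (m1 := (y - a) / (x - a)). set (m2 := (c - y) / (c - x)).
    assert (A1 : 0 < m1) by (apply Rdiv_lt_0_compat; lra).
    assert (A2 : 0 < m2) by (apply Rdiv_lt_0_compat; lra).
    assert (B1 : (x - a) * m1 = y - a) by (unfold m1; field; lra).
    assert (B2 : (c - x) * m2 = c - y) by (unfold m2; field; lra).
    exists (1 + m1 + m2). split; [lra|].
    assert (HL : 0 <= 1 + m1 + m2) by lra.
    assert (L1 : lipon (pl a c x y) (1 + m1 + m2) 0 a).
    { apply (lip_lin _ _ 0 1). intros t Ht. unfold pl. destruct (Rle_dec t a); lra.
      rewrite Rabs_R1; lra. }
    assert (L2 : lipon (pl a c x y) (1 + m1 + m2) a x).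
    { apply (lip_lin _ _ (a - a * m1) m1). intros t Ht. unfold pl. destruct (Rle_dec t a).
      assert (t = a) by lra. subst. ring. destruct (Rle_dec t x); [fold m1; ring|lra].
      rewrite Rabs_right; lra. }
    assert (L3 : lipon (pl a c x y) (1 + m1 + m2) x c).
    { apply (lip_lin _ _ (y - x * m2) m2). intros t Ht. unfold pl. destruct (Rle_dec t a); [lra|].
      destruct (Rle_dec t x). assert (t = x) by lra. subst. fold m1. nra.
      destruct (Rle_dec t c); [fold m2; ring|lra].
      rewrite Rabs_right; lra. }
    assert (L4 : lipon (pl a c x y) (1 + m1 + m2) c 1).
    { apply (lip_lin _ _ 0 1). intros t Ht. unfold pl. destruct (Rle_dec t a); [lra|].
      destruct (Rle_dec t x); [lra|]. destruct (Rle_dec t c). assert (t = c) by lra. subst.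
      fold m2. nra. lra.
      rewrite Rabs_R1; lra. }
    assert (L34 := lip_glue _ _ x c 1 HL L3 L4 ltac:(lra)).
    assert (L24 := lip_glue _ _ a x 1 HL L2 L34 ltac:(lra)).
    exact (lip_glue _ _ 0 a 1 HL L1 L24 ltac:(lra)).
Qed.

Lemma pl_goodpair a c x y : 0 <= a -> c <= 1 -> a < x < c -> a < y < c ->
  goodpair (pl a c x y) (pl a c y x).
Proof.
  intros. split; [apply pl_good1; auto|split; [apply pl_good1; auto|split]];
  intros; apply pl_inv; auto.
Qed.

Definition mob (p l t : R) : R := if Rle_dec t p then l * p * t / (p + (l - 1) * t) else t.

Lemma mob_D p l t : 0 < p -> 0 < l -> 0 <= t <= p -> p * Rmin 1 l <= p + (l - 1) * t.
Proof.
  intros Hp Hl Ht. unfold Rmin; destruct (Rle_dec 1 l); nra.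
Qed.

Lemma Rmin1_pos l : 0 < l -> 0 < Rmin 1 l.
Proof. intros; unfold Rmin; destruct Rle_dec; lra. Qed.

Lemma mob_in p l t : 0 < p -> 0 < l -> 0 <= t <= p ->
  mob p l t = l * p * t / (p + (l - 1) * t).
Proof. intros; unfold mob; destruct Rle_dec; auto; lra. Qed.

Lemma mob_out p l t : 0 < p -> 0 < l -> p <= t -> mob p l t = t.
Proof.
  intros Hp Hl Ht. unfold mob; destruct Rle_dec; auto. assert (t = p) by lra. subst. field. nra.
Qed.

Lemma mob_range p l t : 0 < p -> 0 < l -> 0 <= t <= p -> 0 <= mob p l t <= p /\ (0 < t < p -> 0 < mob p l t < p).
Proof.
  intros Hp Hl Ht. rewrite mob_in by auto.
  pose proof (mob_D p l t Hp Hl Ht). pose proof (Rmin1_pos l Hl).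
  assert (HD : 0 < p + (l - 1) * t) by nra.
  assert (Hlp : 0 < l * p) by (apply Rmult_lt_0_compat; lra).
  split; [split|intros Ht'; split].
  - unfold Rdiv; apply Rmult_le_pos; [apply Rmult_le_pos; [apply Rmult_le_pos|]; lra|left; apply Rinv_0_lt_compat; lra].
  - apply Rmult_le_reg_r with (p + (l - 1) * t); auto. unfold Rdiv.
    rewrite Rmult_assoc, Rinv_l, Rmult_1_r by lra.
    assert (0 <= p * (p - t)) by (apply Rmult_le_pos; lra). nra.
  - apply Rdiv_lt_0_compat; [apply Rmult_lt_0_compat|]; lra.
  - apply Rmult_lt_reg_r with (p + (l - 1) * t); auto. unfold Rdiv.
    rewrite Rmult_assoc, Rinv_l, Rmult_1_r by lra.
    assert (0 < p * (p - t)) by (apply Rmult_lt_0_compat; lra). nra.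
Qed.

Lemma mob_inv p l t : 0 < p -> 0 < l -> 0 <= t <= 1 -> mob p (/ l) (mob p l t) = t.
Proof.
  intros Hp Hl Ht. destruct (Rle_dec t p).
  - destruct (mob_range p l t Hp Hl ltac:(lra)) as [Rr _].
    pose proof (mob_D p l t Hp Hl ltac:(lra)). pose proof (Rmin1_pos l Hl).
    assert (HD : 0 < p + (l - 1) * t) by nra.
    rewrite (mob_in p (/ l)) by (auto; apply Rinv_0_lt_compat; auto).
    rewrite mob_in by (auto; lra).
    replace (p + (/ l - 1) * (l * p * t / (p + (l - 1) * t))) with (p * p / (p + (l - 1) * t))
      by (field; lra).
    field. lra.
  - rewrite (mob_out p l t) by lra. rewrite (mob_out p (/ l) t); auto; try lra. apply Rinv_0_lt_compat; auto.
Qed.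

Lemma mob_good1 p l : 0 < p <= 1 -> 0 < l -> good1 (mob p l).
Proof.
  intros Hp Hl. split; [|split].
  - intros t Ht. destruct (Rle_dec t p).
    + destruct (mob_range p l t ltac:(lra) Hl ltac:(lra)) as [Rr _]. lra.
    + rewrite mob_out; lra.
  - rewrite mob_in by lra. unfold Rdiv; ring.
  - pose proof (Rmin1_pos l Hl) as Hm. set (m := Rmin 1 l) in *.
    set (L := l / (m * m) + 1).
    assert (HL : 0 < L) by (unfold L; assert (0 < l / (m*m)) by (apply Rdiv_lt_0_compat; nra); lra).
    exists L; split; auto.
    assert (L1 : lipon (mob p l) L 0 p).
    { intros s t Hs Ht. rewrite !mob_in by lra.
      pose proof (mob_D p l s ltac:(lra) Hl Hs). pose proof (mob_D p l t ltac:(lra) Hl Ht).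
      fold m in H, H0.
      assert (Ds : 0 < p + (l - 1) * s) by nra. assert (Dt : 0 < p + (l - 1) * t) by nra.
      replace (l * p * s / (p + (l - 1) * s) - l * p * t / (p + (l - 1) * t))
        with ((l * p * p) * (s - t) / ((p + (l - 1) * s) * (p + (l - 1) * t))) by (field; lra).
      unfold Rdiv. rewrite Rabs_mult, Rabs_mult, Rabs_inv.
      assert (Q1 : 0 < l * p * p) by (repeat apply Rmult_lt_0_compat; lra).
      assert (Q2 : 0 < p * m) by (apply Rmult_lt_0_compat; lra).
      assert (Q3 : 0 < (p + (l - 1) * s) * (p + (l - 1) * t)) by (apply Rmult_lt_0_compat; lra).
      rewrite (Rabs_right (l * p * p)) by lra.
      rewrite (Rabs_right ((p + (l - 1) * s) * (p + (l - 1) * t))) by lra.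
      assert (P2 : p * m * (p * m) <= (p + (l - 1) * s) * (p + (l - 1) * t)).
      { apply Rmult_le_compat; lra. }
      assert (Hinv : / ((p + (l - 1) * s) * (p + (l - 1) * t)) <= / (p * m * (p * m))).
      { apply Rinv_le_contravar; auto. apply Rmult_lt_0_compat; lra. }
      assert (l * p * p * / (p * m * (p * m)) = l / (m * m)) by (field; lra).
      assert (l * p * p * / ((p + (l - 1) * s) * (p + (l - 1) * t)) <= l / (m * m)) by
        (rewrite <- H1; apply Rmult_le_compat_l; lra).
      pose proof (Rabs_pos (s - t)). unfold L.
      replace (l * p * p * Rabs (s - t) * / ((p + (l - 1) * s) * (p + (l - 1) * t))) with
        ((l * p * p * / ((p + (l - 1) * s) * (p + (l - 1) * t))) * Rabs (s - t)) by ring.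
      nra. }
    assert (L2 : lipon (mob p l) L p 1).
    { apply (lip_lin _ _ 0 1). intros; rewrite mob_out; lra. rewrite Rabs_R1.
      unfold L. assert (0 < l / (m*m)) by (apply Rdiv_lt_0_compat; nra). lra. }
    assert (HL0 : 0 <= L) by lra. assert (Hp1 : 0 <= p <= 1) by lra. exact (lip_glue _ _ 0 p 1 HL0 L1 L2 Hp1).
Qed.

Lemma mob_goodpair p l : 0 < p <= 1 -> 0 < l -> goodpair (mob p l) (mob p (/ l)).
Proof.
  intros Hp Hl. assert (0 < / l) by (apply Rinv_0_lt_compat; auto).
  split; [apply mob_good1; auto|split; [apply mob_good1; auto|split]]; intros t Ht.
  - apply mob_inv; auto; lra.
  - rewrite <- (Rinv_inv l) at 1. apply mob_inv; auto; lra.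
Qed.

Lemma mob_odds p l t : 0 < p -> 0 < l -> 0 < t < p ->
  mob p l t / (p - mob p l t) = l * (t / (p - t)).
Proof.
  intros Hp Hl Ht. rewrite mob_in by lra.
  pose proof (mob_D p l t Hp Hl ltac:(lra)). pose proof (Rmin1_pos l Hl).
  assert (HD : 0 < p + (l - 1) * t) by nra.
  replace (p - l * p * t / (p + (l - 1) * t)) with (p * (p - t) / (p + (l - 1) * t)) by (field; lra).
  field. repeat split; nra.
Qed.

Definition pw (z : Z) : R := Rpower 2 (IZR z).

Lemma pw_pos z : 0 < pw z.
Proof. unfold pw, Rpower. apply exp_pos. Qed.

Lemma pw_lt z z' : (z < z')%Z -> pw z < pw z'.
Proof. intros. unfold pw. apply Rpower_lt; [lra|]. apply IZR_lt; auto. Qed.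

Lemma pw_le z z' : (z <= z')%Z -> pw z <= pw z'.
Proof. intros. destruct (Z.eq_dec z z'); [subst; lra|]. left; apply pw_lt; lia. Qed.

Lemma pw_lt_inv z z' : pw z < pw z' -> (z < z')%Z.
Proof. intros H. destruct (Z_lt_le_dec z z'); auto. pose proof (pw_le z' z l). lra. Qed.

Lemma pw_inj z z' : pw z = pw z' -> z = z'.
Proof.
  intros H. destruct (Z.lt_trichotomy z z') as [L|[E|L]]; auto;
  apply pw_lt in L; lra.
Qed.

Lemma pw_add z z' : pw (z + z') = pw z * pw z'.
Proof. unfold pw. rewrite plus_IZR. apply Rpower_plus. Qed.

Lemma pw_0 : pw 0 = 1.
Proof. unfold pw. apply Rpower_O. lra. Qed.

Lemma pw_1 : pw 1 = 2.
Proof. unfold pw. apply Rpower_1. lra. Qed.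

Lemma pw_between z z2 : pw z < pw z2 -> pw z2 < pw (z + 1) -> False.
Proof. intros A B. apply pw_lt_inv in A. apply pw_lt_inv in B. lia. Qed.

Lemma floor_log u : 0 < u -> exists z, pw z <= u < pw (z + 1).
Proof.
  intros Hu. assert (L2 : 0 < ln 2) by (rewrite <- ln_1; apply ln_increasing; lra).
  set (x := ln u / ln 2).
  assert (Ex : Rpower 2 x = u).
  { unfold Rpower, x. replace (ln u / ln 2 * ln 2) with (ln u) by (field; lra). apply exp_ln; auto. }
  destruct (archimed x) as [A1 A2].
  exists (up x - 1)%Z. unfold pw. rewrite minus_IZR.
  replace (up x - 1 + 1)%Z with (up x) by ring. split.
  - rewrite <- Ex. destruct (Req_dec (IZR (up x) - 1) x) as [E|E].
    + rewrite E; lra.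
    + left. apply Rpower_lt; lra.
  - rewrite <- Ex. apply Rpower_lt; lra.
Qed.

Definition od (p t : R) : R := t / (p - t).
Definition oinv (p u : R) : R := p * u / (1 + u).

Lemma od_pos p t : 0 < t < p -> 0 < od p t.
Proof. intros. unfold od. apply Rdiv_lt_0_compat; lra. Qed.

Lemma od_lt p s t : 0 < s -> s < t -> t < p -> od p s < od p t.
Proof.
  intros. unfold od. apply Rmult_lt_reg_r with ((p - s) * (p - t)).
  apply Rmult_lt_0_compat; lra.
  replace (s / (p - s) * ((p - s) * (p - t))) with (s * (p - t)) by (field; lra).
  replace (t / (p - t) * ((p - s) * (p - t))) with (t * (p - s)) by (field; lra).
  nra.
Qed.

Lemma od_lt_inv p s t : 0 < s < p -> 0 < t < p -> od p s < od p t -> s < t.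
Proof.
  intros Hs Ht H. destruct (Rlt_le_dec s t); auto. destruct (Req_dec s t).
  subst; lra. pose proof (od_lt p t s ltac:(lra) ltac:(lra) ltac:(lra)). lra.
Qed.

Lemma od_inj p s t : 0 < s < p -> 0 < t < p -> od p s = od p t -> s = t.
Proof.
  intros Hs Ht H. destruct (Rlt_le_dec s t).
  - pose proof (od_lt p s t ltac:(lra) ltac:(lra) ltac:(lra)). lra.
  - destruct (Req_dec s t); auto. pose proof (od_lt p t s ltac:(lra) ltac:(lra) ltac:(lra)). lra.
Qed.

Lemma oinv_range p u : 0 < p -> 0 < u -> 0 < oinv p u < p.
Proof.
  intros. unfold oinv. split. apply Rdiv_lt_0_compat; nra.
  apply Rmult_lt_reg_r with (1 + u); [lra|]. unfold Rdiv.
  rewrite Rmult_assoc, Rinv_l, Rmult_1_r by lra. nra.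
Qed.

Lemma od_oinv p u : 0 < p -> 0 < u -> od p (oinv p u) = u.
Proof.
  intros. unfold od, oinv.
  replace (p - p * u / (1 + u)) with (p / (1 + u)) by (field; lra). field. lra.
Qed.

Lemma between_od p a c s : 0 < p -> 0 < a -> 0 < c -> 0 < s < p ->
  (oinv p a < s < oinv p c <-> a < od p s < c).
Proof.
  intros Hp Ha Hc Hs. pose proof (oinv_range p a Hp Ha). pose proof (oinv_range p c Hp Hc).
  split; intros [H1 H2].
  - split.
    + rewrite <- (od_oinv p a) by auto. apply od_lt; lra.
    + rewrite <- (od_oinv p c) by auto. apply od_lt; lra.
  - split.
    + apply (od_lt_inv p); auto. rewrite od_oinv; auto.
    + apply (od_lt_inv p); auto. rewrite od_oinv; auto.
Qed.

Lemma INR_lt_S a b : INR a < INR b + 1 -> (a <= b)%nat.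
Proof. intros H. rewrite <- S_INR in H. apply INR_lt in H. lia. Qed.

Lemma grid_int g l w : w = INR g -> INR l - 1 < w < INR l -> False.
Proof.
  intros -> [H1 H2]. apply INR_lt in H2. assert (INR l < INR g + 1) by lra.
  apply INR_lt_S in H. lia.
Qed.

Lemma int_unique l l' w : INR l - 1 < w < INR l -> INR l' - 1 < w < INR l' -> l = l'.
Proof.
  intros [A B] [C D]. assert (l <= l')%nat by (apply INR_lt_S; lra).
  assert (l' <= l)%nat by (apply INR_lt_S; lra). lia.
Qed.

Lemma grid_close g g' : Rabs (INR g - INR g') < 1 -> g = g'.
Proof.
  intros H. destruct (Nat.lt_trichotomy g g') as [L|[E|L]]; auto; exfalso.
  - assert (INR (S g) <= INR g') by (apply le_INR; lia). rewrite S_INR in H0.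
    rewrite Rabs_left1 in H by lra. lra.
  - assert (INR (S g') <= INR g) by (apply le_INR; lia). rewrite S_INR in H0.
    rewrite Rabs_right in H by lra. lra.
Qed.

Lemma nat_split N w : 0 < w <= INR N ->
  (exists g, (1 <= g <= N)%nat /\ w = INR g) \/
  (exists l, (1 <= l <= N)%nat /\ INR l - 1 < w < INR l).
Proof.
  induction N; intros Hw.
  - simpl in Hw; lra.
  - rewrite S_INR in Hw. destruct (Rle_dec w (INR N)) as [L|L].
    + destruct (Rlt_dec 0 w) as [P|P]; [|lra].
      destruct (IHN (conj P L)) as [[g [Hg E]]|[l [Hl E]]].
      * left; exists g; split; auto; lia.
      * right; exists l; split; auto; lia.
    + destruct (Req_dec w (INR N + 1)).
      * left. exists (S N). split; [lia|]. rewrite S_INR; auto.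
      * right. exists (S N). split; [lia|]. rewrite S_INR; lra.
Qed.

Definition pN (N : nat) : R := / INR N.
Definition Kset (N : nat) (t : R) : Prop := 0 < t < pN N /\ exists z, od (pN N) t = pw z.
Definition KK (N : nat) (b : bool) (t : R) : Prop := b = true /\ Kset N t.
Definition LT (N : nat) (b : bool) (t : R) (j : nat) : Prop :=
  (exists g, (1 <= g <= N)%nat /\ t * INR N = INR g /\ j = g) \/
  (KK N b t /\ j = S N) \/
  (exists l, (1 <= l <= N)%nat /\ INR l - 1 < t * INR N < INR l /\ ~ KK N b t /\
             j = (N + Nat.b2n b + l)%nat).

Lemma INR_N_ge1 N : (1 <= N)%nat -> 1 <= INR N.
Proof. intros. apply (le_INR 1 N) in H. simpl in H. auto. Qed.

Lemma pN_pos N : (1 <= N)%nat -> 0 < pN N <= 1.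
Proof.
  intros H. pose proof (INR_N_ge1 N H). unfold pN. split.
  apply Rinv_0_lt_compat; lra. rewrite <- Rinv_1. apply Rinv_le_contravar; lra.
Qed.

Lemma lt_pN N t : (1 <= N)%nat -> (t < pN N <-> t * INR N < 1).
Proof.
  intros H. pose proof (INR_N_ge1 N H). unfold pN. split; intros A.
  - apply Rmult_lt_compat_r with (r := INR N) in A; [|lra]. rewrite Rinv_l in A by lra. auto.
  - apply Rmult_lt_reg_r with (INR N); [lra|]. rewrite Rinv_l by lra. auto.
Qed.

Lemma K_small N b t : (1 <= N)%nat -> KK N b t -> 0 < t * INR N < 1.
Proof.
  intros H [_ [[A B] _]]. pose proof (INR_N_ge1 N H). split. nra. apply lt_pN; auto.
Qed.

Lemma LT_ge1 N b t j : LT N b t j -> (1 <= j)%nat.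
Proof. intros [[g [? [? ?]]]|[[? ?]|[l [? [? [? ?]]]]]]; lia. Qed.

Lemma LT_fun N b t j j' : (1 <= N)%nat -> LT N b t j -> LT N b t j' -> j = j'.
Proof.
  intros HN A B.
  destruct A as [[g [Hg [Eg ->]]]|[[Kt ->]|[l [Hl [Il [Kl ->]]]]]];
  destruct B as [[g' [Hg' [Eg' ->]]]|[[Kt' ->]|[l' [Hl' [Il' [Kl' ->]]]]]]; auto.
  - apply INR_eq. congruence.
  - pose proof (K_small N b t HN Kt'). assert (1 <= INR g) by (apply (le_INR 1); lia). lra.
  - exfalso; apply (grid_int g l' (t * INR N)); auto.
  - pose proof (K_small N b t HN Kt). assert (1 <= INR g') by (apply (le_INR 1); lia). lra.
  - tauto.
  - exfalso; apply (grid_int g' l (t * INR N)); auto.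
  - tauto.
  - f_equal. apply (int_unique l l' (t * INR N)); auto.
Qed.

Lemma LT_total N b t : (1 <= N)%nat -> 0 < t <= 1 ->
  exists j, (j <= 2 * N + Nat.b2n b)%nat /\ LT N b t j.
Proof.
  intros HN Ht. pose proof (INR_N_ge1 N HN).
  destruct (nat_split N (t * INR N)) as [[g [Hg E]]|[l [Hl E]]].
  { split; nra. }
  - exists g. split; [lia|]. left. exists g; auto.
  - destruct (Classical_Prop.classic (KK N b t)) as [K|K].
    + exists (S N). split; [destruct b; simpl; lia|]. right; left; auto.
    + exists (N + Nat.b2n b + l)%nat. split; [lia|]. right; right. exists l; auto.
Qed.

Lemma scale_lt x s M : 0 < M -> (x / M < s <-> x < s * M).
Proof.
  intros HM. split; intros H.
  - apply Rmult_lt_compat_r with (r := M) in H; auto. unfold Rdiv in H.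
    rewrite Rmult_assoc, Rinv_l, Rmult_1_r in H by lra. auto.
  - apply Rmult_lt_reg_r with M; auto. unfold Rdiv. rewrite Rmult_assoc, Rinv_l, Rmult_1_r by lra. auto.
Qed.

Lemma scale_gt x s M : 0 < M -> (s < x / M <-> s * M < x).
Proof.
  intros HM. split; intros H.
  - apply Rmult_lt_compat_r with (r := M) in H; auto. unfold Rdiv in H.
    rewrite Rmult_assoc, Rinv_l, Rmult_1_r in H by lra. auto.
  - apply Rmult_lt_reg_r with M; auto. unfold Rdiv. rewrite Rmult_assoc, Rinv_l, Rmult_1_r by lra. auto.
Qed.

Lemma notK_big N b t : (1 <= N)%nat -> 1 <= t * INR N -> ~ KK N b t.
Proof. intros HN H K. pose proof (K_small N b t HN K). lra. Qed.

Lemma pN_N N : (1 <= N)%nat -> pN N * INR N = 1.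
Proof. intros. unfold pN. apply Rinv_l. pose proof (INR_N_ge1 N H). lra. Qed.

Lemma gap_of N t : (1 <= N)%nat -> 0 < t < pN N -> ~ Kset N t ->
  exists z, pw z < od (pN N) t < pw (z + 1).
Proof.
  intros HN Ht NK. destruct (floor_log (od (pN N) t)) as [z [A B]].
  apply od_pos; auto. exists z. split; auto.
  destruct A as [A|A]; auto. exfalso; apply NK. split; auto. exists z; auto.
Qed.

Lemma gap_set N z s : (1 <= N)%nat -> oinv (pN N) (pw z) < s < oinv (pN N) (pw (z + 1)) ->
  0 < s < pN N /\ ~ Kset N s.
Proof.
  intros HN Hs. pose proof (pN_pos N HN).
  pose proof (oinv_range (pN N) (pw z) ltac:(lra) (pw_pos z)).
  pose proof (oinv_range (pN N) (pw (z+1)) ltac:(lra) (pw_pos (z+1))).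
  assert (S : 0 < s < pN N) by lra. split; auto.
  intros [_ [z2 E]]. apply (between_od (pN N) (pw z) (pw (z+1)) s) in Hs; auto; try lra; try apply pw_pos.
  rewrite E in Hs. destruct Hs. apply (pw_between z z2); auto.
Qed.

Lemma noK_ball N b t : (1 <= N)%nat -> 0 < t -> t <> pN N -> ~ KK N b t ->
  exists e, 0 < e /\ forall s, Rabs (s - t) < e -> ~ KK N b s.
Proof.
  intros HN Ht Hp NK. destruct b.
  2: { exists 1; split; [lra|]. intros s _ [D _]; discriminate. }
  assert (NKs : ~ Kset N t) by (intro; apply NK; split; auto).
  destruct (Rlt_le_dec t (pN N)) as [L|L].
  - destruct (gap_of N t HN (conj Ht L) NKs) as [z A].
    pose proof (pN_pos N HN).
    apply (between_od (pN N) (pw z) (pw (z+1)) t) in A; try lra; try apply pw_pos; auto.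
    set (a := oinv (pN N) (pw z)) in *. set (c := oinv (pN N) (pw (z+1))) in *.
    exists (Rmin (t - a) (c - t)). split. unfold Rmin; destruct Rle_dec; lra.
    intros s Hs [_ K]. assert (a < s < c).
    { unfold Rmin, Rabs in Hs; destruct Rle_dec; destruct Rcase_abs; lra. }
    apply (gap_set N z s HN); auto.
  - exists (t - pN N). split; [lra|]. intros s Hs [_ [[_ K] _]].
    unfold Rabs in Hs; destruct Rcase_abs; lra.
Qed.

Lemma point_int N b l : (1 <= N)%nat -> (1 <= l <= N)%nat ->
  exists t, 0 < t <= 1 /\ INR l - 1 < t * INR N < INR l /\ ~ KK N b t.
Proof.
  intros HN Hl. pose proof (INR_N_ge1 N HN) as HN1. pose proof (pN_pos N HN) as Hp.
  pose proof (pN_N N HN) as HpN.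
  destruct (Nat.eq_dec l 1) as [L1|L1].
  - subst l. exists (3 / 5 * pN N). split; [lra|]. simpl.
    replace (3 / 5 * pN N * INR N) with (3/5 * (pN N * INR N)) by ring. split; [lra|].
    intros [_ [_ [z E]]]. unfold od in E.
    replace (3 / 5 * pN N / (pN N - 3 / 5 * pN N)) with (3/2) in E by (field; lra).
    apply (pw_between 0 z). rewrite pw_0, <- E; lra. simpl. rewrite pw_1, <- E; lra.
  - exists ((INR l - /2) / INR N).
    assert (2 <= INR l) by (apply (le_INR 2); lia). assert (INR l <= INR N) by (apply le_INR; lia).
    assert (E1 : (INR l - /2) / INR N * INR N = INR l - /2) by (field; lra).
    split. split. apply Rdiv_lt_0_compat; lra.
    apply Rmult_le_reg_r with (INR N); [lra|]. rewrite E1. lra.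
    rewrite E1. split; [lra|]. apply notK_big; auto; rewrite E1; lra.
Qed.

Lemma LT_surj N b j : (1 <= N)%nat -> (1 <= j <= 2 * N + Nat.b2n b)%nat ->
  exists t, 0 < t <= 1 /\ LT N b t j.
Proof.
  intros HN Hj. pose proof (INR_N_ge1 N HN) as HN1. pose proof (pN_pos N HN) as Hp.
  pose proof (pN_N N HN) as HpN.
  destruct (le_lt_dec j N) as [J|J].
  - exists (INR j / INR N). assert (1 <= INR j) by (apply (le_INR 1); lia).
    assert (INR j <= INR N) by (apply le_INR; lia).
    split. split. apply Rdiv_lt_0_compat; lra.
    apply Rmult_le_reg_r with (INR N); [lra|]. unfold Rdiv.
    rewrite Rmult_assoc, Rinv_l by lra. lra.
    left. exists j. split; [lia|]. split; auto. field; lra.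
  - destruct (Bool.bool_dec b true) as [B|B]; [destruct (Nat.eq_dec j (S N)) as [E|E]|].
    + subst. exists (pN N / 2). split; [lra|]. right; left. split; auto. split; auto.
      split; [lra|]. exists 0%Z. rewrite pw_0. unfold od. field. lra.
    + subst b. simpl in Hj.
      destruct (point_int N true (j - N - 1) HN ltac:(lia)) as [t [Ht [I K]]].
      exists t. split; auto. right; right. exists (j - N - 1)%nat. split; [lia|].
      split; [auto|split; [auto|simpl; lia]].
    + assert (b = false) by (destruct b; auto; congruence). subst b. simpl in Hj.
      destruct (point_int N false (j - N) HN ltac:(lia)) as [t [Ht [I K]]].
      exists t. split; auto. right; right. exists (j - N)%nat. split; [lia|].
      split; [auto|split; [auto|simpl; lia]].
Qed.

Lemma LT_lsc N b t j : (1 <= N)%nat -> 0 < t <= 1 -> LT N b t j ->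
  exists e, 0 < e /\ forall s j', 0 < s <= 1 -> Rabs (s - t) < e -> LT N b s j' -> (j <= j')%nat.
Proof.
  intros HN Ht L. pose proof (INR_N_ge1 N HN) as HN1. pose proof (pN_pos N HN) as Hp.
  pose proof (pN_N N HN) as HpN.
  destruct L as [[g [Hg [Eg ->]]]|[[Kt ->]|[l [Hl [Il [Kl ->]]]]]].
  - exists (pN N). split; [lra|]. intros s j' Hs Hst Ls.
    destruct Ls as [[g' [Hg' [Eg' ->]]]|[[Ks ->]|[l' [Hl' [Il' [Kl' ->]]]]]]; try lia.
    assert (g' = g); [|lia]. apply grid_close. rewrite <- Eg, <- Eg'.
    replace (s * INR N - t * INR N) with ((s - t) * INR N) by ring.
    rewrite Rabs_mult, (Rabs_right (INR N)) by lra.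
    rewrite <- HpN. apply Rmult_lt_compat_r; lra.
  - destruct Kt as [Bt [[Kt1 Kt2] Kt3]].
    exists (pN N - t). split; [lra|]. intros s j' Hs Hst Ls.
    destruct Ls as [[g' [Hg' [Eg' ->]]]|[[Ks ->]|[l' [Hl' [Il' [Kl' ->]]]]]]; try lia.
    exfalso. assert (s < pN N) by (unfold Rabs in Hst; destruct Rcase_abs; lra).
    apply (lt_pN N s HN) in H. assert (1 <= INR g') by (apply (le_INR 1); lia). lra.
  - assert (Hl1 : 1 <= INR l) by (apply (le_INR 1); lia).
    assert (tp : t <> pN N).
    { intro E. apply (grid_int 1 l (t * INR N)); auto. rewrite E, HpN; simpl; auto. }
    destruct (noK_ball N b t HN ltac:(lra) tp Kl) as [e2 [He2 B2]].
    set (a := (INR l - 1) / INR N). set (c := INR l / INR N).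
    assert (Ha : a < t) by (apply (proj2 (scale_lt (INR l - 1) t (INR N) ltac:(lra))); lra).
    assert (Hc : t < c) by (apply (proj2 (scale_gt (INR l) t (INR N) ltac:(lra))); lra).
    exists (Rmin e2 (Rmin (t - a) (c - t))). split.
    { unfold Rmin; repeat destruct Rle_dec; lra. }
    intros s j' Hs Hst Ls.
    assert (Hs2 : Rabs (s - t) < e2) by (unfold Rmin in Hst; repeat destruct Rle_dec; lra).
    assert (Hsa : a < s < c).
    { unfold Rmin, Rabs in Hst; repeat destruct Rle_dec; destruct Rcase_abs; lra. }
    assert (Is : INR l - 1 < s * INR N < INR l).
    { split. apply (proj1 (scale_lt (INR l - 1) s (INR N) ltac:(lra))); unfold a in Hsa; lra.
      apply (proj1 (scale_gt (INR l) s (INR N) ltac:(lra))); unfold c in Hsa; lra. }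
    destruct Ls as [[g' [Hg' [Eg' ->]]]|[[Ks ->]|[l' [Hl' [Il' [Kl' ->]]]]]].
    + exfalso. apply (grid_int g' l (s * INR N)); auto.
    + exfalso. apply (B2 s); auto.
    + assert (l = l') by (apply (int_unique l l' (s * INR N)); auto). lia.
Qed.

Lemma goodpair_id : goodpair (fun t => t) (fun t => t).
Proof.
  assert (good1 (fun t => t)).
  { split; [intros; lra|split; auto]. exists 1; split; [lra|]. intros; lra. }
  split; auto.
Qed.

Lemma pres_comp L h1 h1' h2 : goodpair h1 h1' -> pres L h1 -> pres L h2 ->
  pres L (fun t => h2 (h1 t)).
Proof.
  intros G P1 P2 s j Hs Ls. apply P2. apply (goodpair_pos h1 h1'); auto. apply P1; auto.
Qed.

Lemma pl_pres N b a c x y j0 : (1 <= N)%nat -> a < x < c -> a < y < c ->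
  (forall s, a < s < c -> LT N b s j0) -> pres (LT N b) (pl a c x y).
Proof.
  intros HN Hx Hy H s j Hs Ls. destruct (Rlt_dec a s) as [A|A]; [destruct (Rlt_dec s c) as [C|C]|].
  - assert (j = j0) by (apply (LT_fun N b s); auto). subst.
    apply H. apply pl_range; auto.
  - rewrite pl_out; auto; lra.
  - rewrite pl_out; auto; lra.
Qed.

Lemma mob_pres N b w : (1 <= N)%nat -> pres (LT N b) (mob (pN N) (pw w)).
Proof.
  intros HN s j Hs Ls. pose proof (INR_N_ge1 N HN) as HN1. pose proof (pN_pos N HN) as Hp.
  pose proof (pN_N N HN) as HpN. pose proof (pw_pos w) as Hw.
  destruct (Rle_dec (pN N) s) as [S|S].
  { rewrite mob_out; auto; lra. }
  assert (Ss : 0 < s < pN N) by lra.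
  destruct (mob_range (pN N) (pw w) s ltac:(lra) Hw ltac:(lra)) as [_ R2].
  specialize (R2 Ss). set (s' := mob (pN N) (pw w) s) in *.
  assert (Od : od (pN N) s' = pw w * od (pN N) s) by (apply mob_odds; auto; lra).
  assert (sN : s * INR N < 1) by (apply lt_pN; auto; lra).
  assert (sN' : s' * INR N < 1) by (apply lt_pN; auto; lra).
  destruct Ls as [[g' [Hg' [Eg' ->]]]|[[Ks ->]|[l' [Hl' [Il' [Kl' ->]]]]]].
  - exfalso. assert (1 <= INR g') by (apply (le_INR 1); lia). lra.
  - destruct Ks as [B [_ [z E]]]. right; left. split; auto. split; auto. split; auto.
    exists (w + z)%Z. rewrite Od, E, pw_add; auto.
  - assert (l' = 1%nat) by (assert (INR l' < INR 1 + 1) by (simpl; lra); apply INR_lt_S in H; lia).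
    subst l'. right; right. exists 1%nat. split; auto. split. simpl; split; nra.
    split; auto. intros [B [_ [z E]]]. apply Kl'. split; auto. split; auto.
    exists (z + - w)%Z. rewrite pw_add.
    apply Rmult_eq_reg_l with (pw w); [|lra]. rewrite <- Od, E.
    rewrite <- Rmult_assoc, (Rmult_comm (pw w)), Rmult_assoc, <- pw_add.
    replace (w + - w)%Z with 0%Z by ring. rewrite pw_0; ring.
Qed.

Lemma pw_inv w : / pw w = pw (- w).
Proof.
  pose proof (pw_pos w). apply Rmult_eq_reg_l with (pw w); [|lra].
  rewrite Rinv_r by lra. rewrite <- pw_add. replace (w + - w)%Z with 0%Z by ring.
  rewrite pw_0; auto.
Qed.

Lemma mob_pair N w : (1 <= N)%nat ->
  goodpair (mob (pN N) (pw w)) (mob (pN N) (pw (- w))) /\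
  forall b, pres (LT N b) (mob (pN N) (pw w)) /\ pres (LT N b) (mob (pN N) (pw (- w))).
Proof.
  intros HN. split.
  - rewrite <- pw_inv. apply mob_goodpair. apply pN_pos; auto. apply pw_pos.
  - intros b; split; apply mob_pres; auto.
Qed.

Lemma mob_od p l t : 0 < p -> 0 < l -> 0 < t < p -> od p (mob p l t) = l * od p t.
Proof. intros. unfold od. apply mob_odds; auto. Qed.

Lemma LT_trans N b t t' j : (1 <= N)%nat -> 0 < t <= 1 -> 0 < t' <= 1 ->
  LT N b t j -> LT N b t' j ->
  exists h h', goodpair h h' /\ pres (LT N b) h /\ pres (LT N b) h' /\ h t = t'.
Proof.
  intros HN Ht Ht' L L'. pose proof (INR_N_ge1 N HN) as HN1. pose proof (pN_pos N HN) as Hp.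
  pose proof (pN_N N HN) as HpN.
  destruct L as [[g [Hg [Eg ->]]]|[[Kt ->]|[l [Hl [Il [Kl ->]]]]]];
  destruct L' as [[g' [Hg' [Eg' E]]]|[[Kt' E]|[l' [Hl' [Il' [Kl' E]]]]]];
  subst; simpl in *; try lia;
  try (destruct Kt as [Bt _]; subst b; simpl in *; lia);
  try (destruct Kt' as [Bt _]; subst b; simpl in *; lia).
  -
    exists (fun s => s), (fun s => s). split; [apply goodpair_id|].
    split; [intros s j Hs Ls; auto|split; [intros s j Hs Ls; auto|]].
    apply Rmult_eq_reg_r with (INR N); [congruence|lra].
  -
    destruct Kt as [_ [Kt1 [z Ez]]]. destruct Kt' as [_ [Kt1' [z' Ez']]].
    destruct (mob_pair N (z' - z) HN) as [G P]. destruct (P b) as [P1 P2].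
    exists (mob (pN N) (pw (z' - z))), (mob (pN N) (pw (- (z' - z)))).
    split; auto. split; auto. split; auto.
    destruct (mob_range (pN N) (pw (z' - z)) t ltac:(lra) (pw_pos _) ltac:(lra)) as [_ R2].
    apply (od_inj (pN N)); auto. rewrite mob_od; auto; try lra; try apply pw_pos.
    rewrite Ez, Ez', <- pw_add. f_equal; ring.
  -
    assert (l' = l) by lia. subst l'. clear E.
    assert (Hl1 : 1 <= INR l) by (apply (le_INR 1); lia).
    assert (HlN : INR l <= INR N) by (apply le_INR; lia).
    destruct (Bool.bool_dec b true) as [B|B]; [destruct (Nat.eq_dec l 1) as [L1|L1]|].
    +
      subst b l. simpl in *.
      assert (T1 : t < pN N) by (apply lt_pN; auto; lra).
      assert (T1' : t' < pN N) by (apply lt_pN; auto; lra).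
      assert (NK : ~ Kset N t) by (intro; apply Kl; split; auto).
      assert (NK' : ~ Kset N t') by (intro; apply Kl'; split; auto).
      destruct (gap_of N t HN ltac:(lra) NK) as [z Z].
      destruct (gap_of N t' HN ltac:(lra) NK') as [z' Z'].
      set (w := (z' - z)%Z).
      destruct (mob_pair N w HN) as [G1 P]. destruct (P true) as [P1 P1'].
      set (h1 := mob (pN N) (pw w)) in *. set (h1' := mob (pN N) (pw (- w))) in *.
      destruct (mob_range (pN N) (pw w) t ltac:(lra) (pw_pos _) ltac:(lra)) as [_ R2].
      specialize (R2 ltac:(lra)). fold h1 in R2.
      assert (Ou : od (pN N) (h1 t) = pw w * od (pN N) t) by (apply mob_od; auto; try lra; apply pw_pos).
      assert (Wz : pw w * pw z = pw z') by (rewrite <- pw_add; f_equal; unfold w; ring).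
      assert (Wz1 : pw w * pw (z + 1) = pw (z' + 1)) by (rewrite <- pw_add; f_equal; unfold w; ring).
      pose proof (pw_pos w).
      assert (U : pw z' < od (pN N) (h1 t) < pw (z' + 1)).
      { rewrite Ou, <- Wz, <- Wz1. split; apply Rmult_lt_compat_l; lra. }
      set (A := oinv (pN N) (pw z')). set (C := oinv (pN N) (pw (z' + 1))).
      assert (UA : A < h1 t < C).
      { apply (between_od (pN N)); auto; try lra; apply pw_pos. }
      assert (TA : A < t' < C).
      { apply (between_od (pN N)); auto; try lra; apply pw_pos. }
      pose proof (oinv_range (pN N) (pw z') ltac:(lra) (pw_pos _)).
      pose proof (oinv_range (pN N) (pw (z'+1)) ltac:(lra) (pw_pos _)).
      fold A in H0. fold C in H1.
      assert (G2 : goodpair (pl A C (h1 t) t') (pl A C t' (h1 t))) by (apply pl_goodpair; lra).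
      assert (Lev : forall s, A < s < C -> LT N true s (N + 1 + 1)).
      { intros s Hs. destruct (gap_set N z' s HN Hs) as [S1 S2].
        right; right. exists 1%nat. split; [lia|]. split.
        simpl. split. nra. apply lt_pN; auto; lra.
        split. intros [_ K]; auto. simpl; lia. }
      assert (P2 : pres (LT N true) (pl A C (h1 t) t')) by (apply (pl_pres N true A C _ _ (N+1+1)); auto; lra).
      assert (P2' : pres (LT N true) (pl A C t' (h1 t))) by (apply (pl_pres N true A C _ _ (N+1+1)); auto; lra).
      exists (fun s => pl A C (h1 t) t' (h1 s)), (fun s => h1' (pl A C t' (h1 t) s)).
      split. apply goodpair_comp; auto.
      split. apply (pres_comp _ h1 h1'); auto.
      split. apply (pres_comp _ (pl A C t' (h1 t)) (pl A C (h1 t) t')); auto. apply goodpair_sym; auto.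
      apply pl_at; lra.
    +
      set (a := (INR l - 1) / INR N). set (c := INR l / INR N).
      assert (Ha : a < t) by (apply (proj2 (scale_lt (INR l - 1) t (INR N) ltac:(lra))); lra).
      assert (Hc : t < c) by (apply (proj2 (scale_gt (INR l) t (INR N) ltac:(lra))); lra).
      assert (Ha' : a < t') by (apply (proj2 (scale_lt (INR l - 1) t' (INR N) ltac:(lra))); lra).
      assert (Hc' : t' < c) by (apply (proj2 (scale_gt (INR l) t' (INR N) ltac:(lra))); lra).
      assert (a0 : 0 <= a) by (unfold a; apply Rmult_le_pos; [lra|left; apply Rinv_0_lt_compat; lra]).
      assert (c1 : c <= 1).
      { unfold c. apply Rmult_le_reg_r with (INR N); [lra|]. unfold Rdiv.
        rewrite Rmult_assoc, Rinv_l by lra. lra. }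
      assert (Lev : forall s, a < s < c -> LT N b s (N + Nat.b2n b + l)).
      { intros s Hs. right; right. exists l. split; auto.
        assert (Is : INR l - 1 < s * INR N < INR l).
        { split. apply (proj1 (scale_lt (INR l - 1) s (INR N) ltac:(lra))); unfold a in Hs; lra.
          apply (proj1 (scale_gt (INR l) s (INR N) ltac:(lra))); unfold c in Hs; lra. }
        split; auto. split; auto. apply notK_big; auto.
        assert (2 <= INR l) by (apply (le_INR 2); lia). lra. }
      exists (pl a c t t'), (pl a c t' t). split. apply pl_goodpair; auto.
      split. apply (pl_pres N b a c _ _ (N + Nat.b2n b + l) HN); auto.
      split. apply (pl_pres N b a c _ _ (N + Nat.b2n b + l) HN); auto.
      apply pl_at; lra.
    +
      set (a := (INR l - 1) / INR N). set (c := INR l / INR N).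
      assert (Ha : a < t) by (apply (proj2 (scale_lt (INR l - 1) t (INR N) ltac:(lra))); lra).
      assert (Hc : t < c) by (apply (proj2 (scale_gt (INR l) t (INR N) ltac:(lra))); lra).
      assert (Ha' : a < t') by (apply (proj2 (scale_lt (INR l - 1) t' (INR N) ltac:(lra))); lra).
      assert (Hc' : t' < c) by (apply (proj2 (scale_gt (INR l) t' (INR N) ltac:(lra))); lra).
      assert (a0 : 0 <= a) by (unfold a; apply Rmult_le_pos; [lra|left; apply Rinv_0_lt_compat; lra]).
      assert (c1 : c <= 1).
      { unfold c. apply Rmult_le_reg_r with (INR N); [lra|]. unfold Rdiv.
        rewrite Rmult_assoc, Rinv_l by lra. lra. }
      assert (Lev : forall s, a < s < c -> LT N b s (N + Nat.b2n b + l)).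
      { intros s Hs. right; right. exists l. split; auto.
        assert (Is : INR l - 1 < s * INR N < INR l).
        { split. apply (proj1 (scale_lt (INR l - 1) s (INR N) ltac:(lra))); unfold a in Hs; lra.
          apply (proj1 (scale_gt (INR l) s (INR N) ltac:(lra))); unfold c in Hs; lra. }
        split; auto. split; auto. intros [Bt _]; auto. }
      exists (pl a c t t'), (pl a c t' t). split. apply pl_goodpair; auto.
      split. apply (pl_pres N b a c _ _ (N + Nat.b2n b + l) HN); auto.
      split. apply (pl_pres N b a c _ _ (N + Nat.b2n b + l) HN); auto.
      apply pl_at; lra.
Qed.

Lemma P_fin n k : (1 <= n)%nat -> (2 <= k)%nat -> P_h n (Fin k).
Proof.
  intros Hn Hk.
  set (N := Nat.div2 k). set (b := Nat.odd k).
  assert (Ek : k = (2 * N + Nat.b2n b)%nat) by (apply Nat.div2_odd).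
  assert (HN : (1 <= N)%nat) by (destruct b; simpl in Ek; lia).
  rewrite Ek.
  apply (pos_height n (LT N b)); auto.
  - intros; eapply LT_fun; eauto.
  - intros; eapply LT_ge1; eauto.
  - intros; apply LT_total; auto.
  - intros; apply LT_surj; auto.
  - intros; eapply LT_lsc; eauto.
  - intros; eapply LT_trans; eauto.
Qed.

Theorem theorem4p2 (n : nat) (hn : (3 <= n)%nat) (h : natinf) :
  P_h n h <-> (h = Inf \/ exists k, h = Fin k /\ (2 <= k)%nat).
Proof.
  split.
  - apply forward; auto.
  - intros [->|[k [-> Hk]]].
    + apply P_inf; lia.
    + apply P_fin; auto; lia.
Qed.
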